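(* Suppose that $\mathcal X$ is a wide family of subsets of $\mathbb N$ and $\mathfrak A=(\alpha_X:X\in\mathcal X)$ is coherent. Then the C*-algebra $\mathcal M_{\mathcal X,\mathfrak A}$ is generated by its projections.
   Context: Fix an orthonormal basis $(e_k)$ of $\ell_2$. For $A\subseteq\mathbb N$, $P_A$ is the projection onto $\overline{\mathrm{span}}\{e_{2k},e_{2k+1}:k\in A\}$; $H_n=\mathrm{span}\{e_{2n},e_{2n+1}\}$. $\mathcal A_0$ is the set of $T\in\mathcal B(\ell_2)$ with $\langle Te_k,e_m\rangle\ne0\Rightarrow\{k,m\}\subseteq\{2n,2n+1\}$ for some $n$, written $T=(T_n)$ with $T_n\in\mathcal B(H_n)$; $\mathcal A_0(X)=\{T\in\mathcal A_0:T_n=0\ \forall n\notin X\}$. For $\alpha\in(71/72,1]$, $f_{\alpha,2n}=\alpha e_{2n}+\sqrt{1-\alpha^2}e_{2n+1}$, $f_{\alpha,2n+1}=\sqrt{1-\alpha^2}e_{2n}-\alpha e_{2n+1}$; $\mathcal D(X,\alpha)$: $T\in\mathcal A_0(X)$ with $T_n$ diagonal in $\{f_{\alpha,2n},f_{\alpha,2n+1}\}$ for $n\in X$; $\mathcal D_{\mathcal K}(X,\alpha)=\{S+R:S\in\mathcal D(X,\alpha),R\in\mathcal K(\ell_2)\cap\mathcal A_0(X)\}$. $\mathcal M_{\mathcal X,\mathfrak A}=\{T\in\mathcal A_0:P_XTP_X\in\mathcal D_{\mathcal K}(X,\alpha_X)\ \forall X\in\mathcal X\}$ (a C*-algebra).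 $\mathcal X$ is wide if every infinite subset of $\mathbb N$ has infinite intersection with some member of $\mathcal X$; $\mathfrak A$ is coherent if $\alpha_X\in(71/72,1]$ for all $X$ and $\alpha_X=\alpha_Y$ whenever $X\cap Y$ is infinite. *)

(* Defs.v *)
From Stdlib Require Import Reals Lra ClassicalEpsilon.
From Coquelicot Require Import Coquelicot.
Open Scope R_scope.

Definition vec := nat -> C.
Definition vzero : vec := fun _ => RtoC 0.
Definition vadd (x y : vec) : vec := fun k => Cplus (x k) (y k).
Definition vscal (c : C) (x : vec) : vec := fun k => Cmult c (x k).

Definition l2 (x : vec) : Prop := ex_series (fun k => (Cmod (x k)) ^ 2).
Definition norm2 (x : vec) : R := sqrt (Series (fun k => (Cmod (x k)) ^ 2)).
Definition inner (x y : vec) : C :=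
  (Series (fun k => Re (Cmult (x k) (Cconj (y k)))),
   Series (fun k => Im (Cmult (x k) (Cconj (y k))))).

Definition e (k : nat) : vec := fun j => if Nat.eqb j k then RtoC 1 else RtoC 0.

(** * Bounded operators on l2.
    An operator is represented by a function vec -> vec; to make Leibniz equality
    coincide with equality of operators on l2, we require it to vanish off l2. *)
Definition op := vec -> vec.

Definition bounded_op (T : op) : Prop :=
  (forall x, ~ l2 x -> T x = vzero) /\
  (forall x, l2 x -> l2 (T x)) /\
  (forall x y c, l2 x -> l2 y -> T (vadd x (vscal c y)) = vadd (T x) (vscal c (T y))) /\
  (exists M, forall x, l2 x -> norm2 (T x) <= M * norm2 x).

Definition opadd (T S : op) : op := fun x => vadd (T x) (S x).
Definition opscal (c : C) (T : op) : op := fun x => vscal c (T x).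
Definition opcomp (T S : op) : op := fun x => T (S x).

Definition is_adjoint (T S : op) : Prop :=
  forall x y, l2 x -> l2 y -> inner (T x) y = inner x (S y).

Definition is_projection (P : op) : Prop :=
  bounded_op P /\ opcomp P P = P /\ is_adjoint P P.

(** compact: image of the unit ball is relatively (sequentially) compact,
    i.e. every sequence in the unit ball has a subsequence whose image is Cauchy
    (l2 is complete). *)
Definition compact_op (T : op) : Prop :=
  bounded_op T /\
  forall u : nat -> vec, (forall n, l2 (u n) /\ norm2 (u n) <= 1) ->
    exists phi : nat -> nat, (forall n, (phi n < phi (S n))%nat) /\
      forall eps, 0 < eps -> exists N, forall n m, (N <= n)%nat -> (N <= m)%nat ->
        norm2 (vadd (T (u (phi n))) (vscal (RtoC (-1)) (T (u (phi m))))) <= eps.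

Definition opset := op -> Prop.

Definition cstar_subalg (S : opset) : Prop :=
  (forall T, S T -> bounded_op T) /\
  (forall T U, S T -> S U -> S (opadd T U)) /\
  (forall c T, S T -> S (opscal c T)) /\
  (forall T U, S T -> S U -> S (opcomp T U)) /\
  (forall T T', S T -> bounded_op T' -> is_adjoint T T' -> S T') /\
  (forall T, bounded_op T ->
     (forall eps, 0 < eps -> exists U, S U /\
        forall x, l2 x -> norm2 (vadd (T x) (vscal (RtoC (-1)) (U x))) <= eps * norm2 x) ->
     S T).

Definition cstar_generated (G : opset) : opset :=
  fun T => forall S, cstar_subalg S -> (forall P, G P -> S P) -> S T.

Definition generated_by_projections (M : opset) : Prop :=
  forall T, M T <-> cstar_generated (fun P => M P /\ is_projection P) T.

Definition PA (A : nat -> Prop) : op := fun x =>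
  if excluded_middle_informative (l2 x) then
    (fun j => if excluded_middle_informative (A (j / 2)%nat) then x j else RtoC 0)
  else vzero.

Definition in_block (n k : nat) : Prop := k = (2 * n)%nat \/ k = (2 * n + 1)%nat.

Definition A0 (T : op) : Prop :=
  bounded_op T /\
  forall k m, inner (T (e k)) (e m) <> RtoC 0 -> exists n, in_block n k /\ in_block n m.

Definition block_zero (T : op) (n : nat) : Prop :=
  forall k m, in_block n k -> in_block n m -> inner (T (e k)) (e m) = RtoC 0.

Definition A0_on (X : nat -> Prop) (T : op) : Prop :=
  A0 T /\ forall n, ~ X n -> block_zero T n.

Definition f_even (alpha : R) (n : nat) : vec := fun j =>
  if Nat.eqb j (2 * n) then RtoC alpha
  else if Nat.eqb j (2 * n + 1) then RtoC (sqrt (1 - alpha ^ 2)) else RtoC 0.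
Definition f_odd (alpha : R) (n : nat) : vec := fun j =>
  if Nat.eqb j (2 * n) then RtoC (sqrt (1 - alpha ^ 2))
  else if Nat.eqb j (2 * n + 1) then RtoC (- alpha) else RtoC 0.

Definition Dset (X : nat -> Prop) (alpha : R) (T : op) : Prop :=
  A0_on X T /\
  forall n, X n ->
    inner (T (f_even alpha n)) (f_odd alpha n) = RtoC 0 /\
    inner (T (f_odd alpha n)) (f_even alpha n) = RtoC 0.

Definition DKset (X : nat -> Prop) (alpha : R) (T : op) : Prop :=
  exists S Rk, Dset X alpha S /\ compact_op Rk /\ A0_on X Rk /\ T = opadd S Rk.

Definition Mset (XX : (nat -> Prop) -> Prop) (alph : (nat -> Prop) -> R) (T : op) : Prop :=
  A0 T /\ forall X, XX X -> DKset X (alph X) (opcomp (PA X) (opcomp T (PA X))).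

Definition infinite_set (Y : nat -> Prop) : Prop := forall N, exists n, (N <= n)%nat /\ Y n.

Definition wide (XX : (nat -> Prop) -> Prop) : Prop :=
  forall Y, infinite_set Y -> exists X, XX X /\ infinite_set (fun n => Y n /\ X n).

Definition coherent (XX : (nat -> Prop) -> Prop) (alph : (nat -> Prop) -> R) : Prop :=
  (forall X, XX X -> 71 / 72 < alph X <= 1) /\
  (forall X Y, XX X -> XX Y -> infinite_set (fun n => X n /\ Y n) -> alph X = alph Y).

(* Main.v *)
Require Import Defs.
From Stdlib Require Import Reals ClassicalEpsilon.
From Coquelicot Require Import Coquelicot.
From Stdlib Require Import Lra Nsatz Lia FunctionalExtensionality Classical PropExtensionality.
Open Scope R_scope.

Lemma div2_cases (j : nat) : j = (2 * (j / 2))%nat \/ j = (2 * (j / 2) + 1)%nat.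
Proof.
  pose proof (Nat.div_mod j 2 ltac:(lia)). pose proof (Nat.mod_upper_bound j 2 ltac:(lia)).
  lia.
Qed.
Lemma div_2n (n : nat) : ((2 * n) / 2)%nat = n.
Proof. symmetry. apply (Nat.div_unique _ 2 _ 0); lia. Qed.
Lemma div_2n1 (n : nat) : ((2 * n + 1) / 2)%nat = n.
Proof. symmetry. apply (Nat.div_unique _ 2 _ 1); lia. Qed.
Lemma in_block_div (n k : nat) : in_block n k <-> (k / 2)%nat = n.
Proof.
  unfold in_block; split.
  - intros [-> | ->]. apply div_2n. apply div_2n1.
  - intros <-. apply div2_cases.
Qed.

Lemma C_ext (a b : C) : fst a = fst b -> snd a = snd b -> a = b.
Proof. destruct a, b; simpl; intros; subst; reflexivity. Qed.

Lemma sum_f_R0_single (a : nat -> R) (m : nat) :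
  (forall k, k <> m -> a k = 0) -> forall n, sum_f_R0 a n = if (m <=? n)%nat then a m else 0.
Proof.
  intros H n; induction n; simpl.
  - destruct m; simpl. reflexivity. apply H; lia.
  - rewrite IHn. destruct (Nat.leb_spec m n), (Nat.leb_spec m (S n)); try lia.
    + rewrite (H (S n)) by lia. ring.
    + assert (m = S n) by lia. subst. ring.
    + rewrite (H (S n)) by lia. ring.
Qed.

Lemma is_series_single (a : nat -> R) (m : nat) :
  (forall k, k <> m -> a k = 0) -> is_series a (a m).
Proof.
  intros H. apply is_series_Reals. intros eps Heps. exists m. intros n Hn.
  rewrite (sum_f_R0_single a m H n). destruct (Nat.leb_spec m n); try lia.
  unfold Rdist. rewrite Rminus_diag, Rabs_R0. lra.
Qed.

Lemma Series_single (a : nat -> R) (m : nat) :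
  (forall k, k <> m -> a k = 0) -> Series a = a m.
Proof. intros H. apply is_series_unique, is_series_single, H. Qed.

Lemma ex_series_single (a : nat -> R) (m : nat) :
  (forall k, k <> m -> a k = 0) -> ex_series a.
Proof. intros H. eexists. apply is_series_single with (m := m), H. Qed.

Lemma Series_ge_term (a : nat -> R) (j : nat) :
  ex_series a -> (forall k, 0 <= a k) -> a j <= Series a.
Proof.
  intros Ha Hp.
  assert (E : Series (fun k => if Nat.eqb k j then a k else 0) = a j).
  { rewrite (Series_single _ j). now rewrite Nat.eqb_refl.
    intros k Hk. destruct (Nat.eqb_spec k j); tauto. }
  rewrite <- E. apply Series_le; auto. intros k. destruct (Nat.eqb_spec k j); split; auto; lra.
Qed.

Lemma Series_nonneg (a : nat -> R) : ex_series a -> (forall k, 0 <= a k) -> 0 <= Series a.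
Proof.
  intros He H. rewrite <- (Series_single (fun _ => 0) 0) by auto.
  apply Series_le; auto. intros; split; auto; lra.
Qed.

Definition pairs (a : nat -> R) : nat -> R := fun n => a (2 * n)%nat + a (2 * n + 1)%nat.

Lemma sum_pairs (a : nat -> R) n : sum_f_R0 (pairs a) n = sum_f_R0 a (2 * n + 1).
Proof.
  induction n. unfold pairs; simpl; reflexivity.
  rewrite tech5, IHn. replace (2 * S n + 1)%nat with (S (S (2 * n + 1))) by lia.
  rewrite !tech5. unfold pairs. replace (2 * S n)%nat with (S (2 * n + 1)) by lia.
  replace (S (2 * n + 1) + 1)%nat with (S (S (2 * n + 1))) by lia. ring.
Qed.

Lemma is_series_pairs (a : nat -> R) l : is_series a l -> is_series (pairs a) l.
Proof.
  rewrite !is_series_Reals. intros H eps Heps. destruct (H eps Heps) as [N HN].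
  exists N. intros n Hn. rewrite sum_pairs. apply HN. lia.
Qed.

Lemma sum_f_R0_mono (a : nat -> R) : (forall k, 0 <= a k) -> forall n m, (n <= m)%nat -> sum_f_R0 a n <= sum_f_R0 a m.
Proof.
  intros H n m Hnm. induction Hnm. lra. simpl. specialize (H (S m)). lra.
Qed.

Lemma is_series_unpairs (a : nat -> R) l : (forall k, 0 <= a k) -> is_series (pairs a) l -> is_series a l.
Proof.
  intros Hp H.
  assert (H0 : is_lim_seq (pairs a) 0) by (apply ex_series_lim_0; eexists; eauto).
  apply is_lim_seq_spec in H0.
  rewrite is_series_Reals in *. intros eps Heps.
  destruct (H (eps/2) ltac:(lra)) as [N1 HN1].
  destruct (H0 (mkposreal (eps/2) ltac:(lra))) as [N2 HN2]. simpl in HN2.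
  exists (2 * (N1 + N2) + 2)%nat. intros n Hn.
  set (m := (n / 2)%nat).
  assert (Hm1 : (m >= N1)%nat) by (pose proof (div2_cases n); unfold m; lia).
  assert (Hm2 : (N2 <= m)%nat) by (pose proof (div2_cases n); unfold m; lia).
  specialize (HN1 m Hm1). specialize (HN2 m Hm2). rewrite sum_pairs in HN1.
  unfold Rdist in *. rewrite Rminus_0_r in HN2.
  assert (Hpm : 0 <= pairs a m) by (unfold pairs; pose proof (Hp (2*m)%nat); pose proof (Hp (2*m+1)%nat); lra).
  rewrite Rabs_pos_eq in HN2 by auto.
  destruct (div2_cases n) as [E | E]; fold m in E.
  -
    assert (Hs : sum_f_R0 a (2 * m + 1) = sum_f_R0 a n + a (2 * m + 1)%nat).
    { rewrite E. replace (2 * m + 1)%nat with (S (2 * m)) by lia. simpl. reflexivity. }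
    assert (0 <= a (2 * m + 1)%nat <= pairs a m) by (unfold pairs; pose proof (Hp (2*m)%nat); pose proof (Hp (2*m+1)%nat); lra).
    apply Rabs_def1; apply Rabs_def2 in HN1; lra.
  - rewrite E. apply Rabs_def2 in HN1. apply Rabs_def1; lra.
Qed.

Lemma ex_series_le_R (a b : nat -> R) : (forall n, Rabs (a n) <= b n) -> ex_series b -> ex_series a.
Proof. intros H Hb. apply (@ex_series_le R_AbsRing R_CompleteNormedModule a b); auto. Qed.

Lemma Cmod_sq_nonneg (c : C) : 0 <= Cmod c ^ 2.
Proof. pose proof (Cmod_ge_0 c). nra. Qed.

Lemma Cmod_sq_eq (c : C) : Cmod c ^ 2 = fst c ^ 2 + snd c ^ 2.
Proof. unfold Cmod. rewrite pow2_sqrt; auto. nra. Qed.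

Lemma Cmod_sq_add (a b : C) : Cmod (Cplus a b) ^ 2 <= 2 * Cmod a ^ 2 + 2 * Cmod b ^ 2.
Proof. rewrite !Cmod_sq_eq. destruct a as [a1 a2], b as [b1 b2]; simpl. pose proof (pow2_ge_0 (a1 - b1)). pose proof (pow2_ge_0 (a2 - b2)). nra. Qed.

Lemma Cmod_sq_mult (a b : C) : Cmod (Cmult a b) ^ 2 = Cmod a ^ 2 * Cmod b ^ 2.
Proof. rewrite Cmod_mult. ring. Qed.

Lemma l2_vzero : l2 vzero.
Proof.
  unfold l2, vzero. apply ex_series_single with (m := 0%nat). intros. rewrite Cmod_0. ring.
Qed.

Lemma l2_e (k : nat) : l2 (e k).
Proof.
  unfold l2, e. apply ex_series_single with (m := k). intros j Hj.
  destruct (Nat.eqb_spec j k); try tauto. rewrite Cmod_0. ring.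
Qed.

Lemma l2_vadd (x y : vec) : l2 x -> l2 y -> l2 (vadd x y).
Proof.
  unfold l2, vadd. intros Hx Hy.
  apply (ex_series_le_R _ (fun k => 2 * Cmod (x k) ^ 2 + 2 * Cmod (y k) ^ 2)).
  - intros n. rewrite Rabs_pos_eq by apply Cmod_sq_nonneg.
    apply Cmod_sq_add.
  - destruct Hx as [lx Hx], Hy as [ly Hy]. eexists.
    apply (is_series_plus (fun k => 2 * Cmod (x k) ^ 2) (fun k => 2 * Cmod (y k) ^ 2)).
    apply (is_series_scal_l 2 _ _ Hx). apply (is_series_scal_l 2 _ _ Hy).
Qed.

Lemma l2_vscal (c : C) (x : vec) : l2 x -> l2 (vscal c x).
Proof.
  unfold l2, vscal. intros [lx Hx]. exists (Cmod c ^ 2 * lx).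
  eapply is_series_ext. 2: apply (is_series_scal_l (Cmod c ^ 2) _ _ Hx).
  intros n. rewrite Cmod_sq_mult. reflexivity.
Qed.

Lemma norm2_nonneg (x : vec) : 0 <= norm2 x.
Proof. unfold norm2. apply sqrt_pos. Qed.

Lemma coord_le_norm (x : vec) (j : nat) : l2 x -> Cmod (x j) <= norm2 x.
Proof.
  intros Hx. unfold norm2. rewrite <- (sqrt_pow2 (Cmod (x j))) by apply Cmod_ge_0.
  apply sqrt_le_1_alt. apply (Series_ge_term (fun k => Cmod (x k) ^ 2)); auto.
  intros; apply Cmod_sq_nonneg.
Qed.

Lemma norm2_e (k : nat) : norm2 (e k) = 1.
Proof.
  unfold norm2. rewrite (Series_single _ k).
  - unfold e. rewrite Nat.eqb_refl. rewrite Cmod_1. rewrite pow1. apply sqrt_1.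
  - intros j Hj. unfold e. destruct (Nat.eqb_spec j k); try tauto. rewrite Cmod_0. ring.
Qed.

Lemma block_bound_gen (x y : vec) (c : nat -> R) (Sc C0 : R) : l2 x -> 0 <= C0 ->
  (forall k, 0 <= c k) -> is_series c Sc ->
  (forall j, Cmod (y j) ^ 2 <= c j + C0 * (Cmod (x (2 * (j / 2))%nat) ^ 2 + Cmod (x (2 * (j / 2) + 1)%nat) ^ 2)) ->
  l2 y /\ Series (fun k => Cmod (y k) ^ 2) <= Sc + 2 * C0 * Series (fun k => Cmod (x k) ^ 2).
Proof.
  intros Hx HC Hc0 Hc Hy.
  set (a := fun k => Cmod (y k) ^ 2). set (b := fun k => Cmod (x k) ^ 2).
  assert (Hpa : forall k, 0 <= a k) by (intros; apply Cmod_sq_nonneg).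
  assert (Hpb : forall k, 0 <= b k) by (intros; apply Cmod_sq_nonneg).
  assert (Hcmp : forall n, pairs a n <= pairs c n + 2 * C0 * pairs b n).
  { intros n. unfold pairs, a, b. pose proof (Hy (2 * n)%nat). pose proof (Hy (2 * n + 1)%nat).
    rewrite div_2n in *. rewrite div_2n1 in *. lra. }
  destruct Hx as [lb Hb]. pose proof (is_series_pairs _ _ Hb) as Hpb2.
  pose proof (is_series_pairs _ _ Hc) as Hpc2.
  assert (Hrhs : is_series (fun n => pairs c n + 2 * C0 * pairs b n) (Sc + 2 * C0 * lb)).
  { apply (is_series_plus (pairs c) (fun n => 2 * C0 * pairs b n)). auto.
    apply (is_series_scal_l (2 * C0) _ _ Hpb2). }
  assert (Hea : ex_series (pairs a)).
  { apply (ex_series_le_R _ (fun n => pairs c n + 2 * C0 * pairs b n)).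
    - intros n. rewrite Rabs_pos_eq. apply Hcmp.
      unfold pairs. pose proof (Hpa (2*n)%nat). pose proof (Hpa (2*n+1)%nat). lra.
    - eexists; eauto. }
  destruct Hea as [la Hla].
  pose proof (is_series_unpairs a la Hpa Hla) as Ha.
  split. eexists; exact Ha.
  change (Series a <= Sc + 2 * C0 * Series b).
  assert (Eb : Series b = lb) by (apply is_series_unique; exact Hb).
  rewrite (is_series_unique _ _ Ha), Eb.
  rewrite <- (is_series_unique _ _ Hla), <- (is_series_unique _ _ Hrhs).
  apply Series_le.
  - intros n. split. unfold pairs. pose proof (Hpa (2*n)%nat). pose proof (Hpa (2*n+1)%nat). lra. apply Hcmp.
  - eexists; eauto.
Qed.

Lemma block_bound (x y : vec) (C0 : R) : l2 x -> 0 <= C0 ->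
  (forall j, Cmod (y j) ^ 2 <= C0 * (Cmod (x (2 * (j / 2))%nat) ^ 2 + Cmod (x (2 * (j / 2) + 1)%nat) ^ 2)) ->
  l2 y /\ norm2 y <= sqrt (2 * C0) * norm2 x.
Proof.
  intros Hx HC Hy.
  destruct (block_bound_gen x y (fun _ => 0) 0 C0 Hx HC) as [H1 H2].
  - intros; lra.
  - apply (is_series_single (fun _ => 0) 0). auto.
  - intros j. rewrite Rplus_0_l. auto.
  - split; auto. unfold norm2. rewrite <- sqrt_mult_alt by lra. apply sqrt_le_1_alt. lra.
Qed.

Lemma Cconj_R (r : R) : Cconj (RtoC r) = RtoC r.
Proof. apply C_ext; simpl; ring. Qed.

Lemma inner_one (y v : vec) (p : nat) :
  (forall k, k <> p -> Cmult (y k) (Cconj (v k)) = RtoC 0) ->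
  inner y v = Cmult (y p) (Cconj (v p)).
Proof.
  intros H. unfold inner. apply C_ext; cbn [fst snd].
  - rewrite (Series_single _ p). reflexivity. intros k Hk. rewrite (H k Hk). reflexivity.
  - rewrite (Series_single _ p). reflexivity. intros k Hk. rewrite (H k Hk). reflexivity.
Qed.

Lemma Series_two (u : nat -> R) (p q : nat) : p <> q ->
  (forall k, k <> p -> k <> q -> u k = 0) -> Series u = u p + u q.
Proof.
  intros Hpq H.
  set (u1 := fun k => if Nat.eqb k p then u k else 0).
  set (u2 := fun k => if Nat.eqb k q then u k else 0).
  assert (E : forall k, u k = u1 k + u2 k).
  { intros k. unfold u1, u2. destruct (Nat.eqb_spec k p), (Nat.eqb_spec k q); subst; try tauto; try ring.
    rewrite H; auto; ring. }
  assert (E1 : forall k, k <> p -> u1 k = 0) by (intros k Hk; unfold u1; destruct (Nat.eqb_spec k p); tauto).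
  assert (E2 : forall k, k <> q -> u2 k = 0) by (intros k Hk; unfold u2; destruct (Nat.eqb_spec k q); tauto).
  rewrite (Series_ext _ _ E), Series_plus, (Series_single _ _ E1), (Series_single _ _ E2).
  unfold u1, u2. rewrite !Nat.eqb_refl. reflexivity.
  apply (ex_series_single _ _ E1). apply (ex_series_single _ _ E2).
Qed.

Lemma inner_two (y v : vec) (p q : nat) : p <> q ->
  (forall k, k <> p -> k <> q -> Cmult (y k) (Cconj (v k)) = RtoC 0) ->
  inner y v = Cplus (Cmult (y p) (Cconj (v p))) (Cmult (y q) (Cconj (v q))).
Proof.
  intros Hpq H. unfold inner. apply C_ext; cbn [fst snd].
  - rewrite (Series_two _ p q Hpq). reflexivity. intros k Hk1 Hk2. rewrite (H k Hk1 Hk2). reflexivity.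
  - rewrite (Series_two _ p q Hpq). reflexivity. intros k Hk1 Hk2. rewrite (H k Hk1 Hk2). reflexivity.
Qed.

Lemma inner_e_r (x : vec) (m : nat) : inner x (e m) = x m.
Proof.
  rewrite (inner_one _ _ m).
  - unfold e. rewrite Nat.eqb_refl, Cconj_R. ring.
  - intros k Hk. unfold e. destruct (Nat.eqb_spec k m); try tauto. rewrite Cconj_R. ring.
Qed.

Lemma inner_e_l (y : vec) (k : nat) : inner (e k) y = Cconj (y k).
Proof.
  rewrite (inner_one _ _ k).
  - unfold e. rewrite Nat.eqb_refl. ring.
  - intros j Hj. unfold e. destruct (Nat.eqb_spec j k); try tauto. ring.
Qed.

Definition sa (alpha : R) : R := sqrt (1 - alpha ^ 2).

Lemma inner_f_odd (y : vec) (alpha : R) (n : nat) :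
  inner y (f_odd alpha n) = Cplus (Cmult (y (2 * n)%nat) (RtoC (sa alpha))) (Cmult (y (2 * n + 1)%nat) (RtoC (- alpha))).
Proof.
  rewrite (inner_two _ _ (2 * n) (2 * n + 1)); [ | lia | ].
  - unfold f_odd. rewrite Nat.eqb_refl. replace (Nat.eqb (2 * n + 1) (2 * n)) with false.
    rewrite Nat.eqb_refl, !Cconj_R. reflexivity. symmetry; apply Nat.eqb_neq; lia.
  - intros k H1 H2. unfold f_odd. apply Nat.eqb_neq in H1, H2. rewrite H1, H2, Cconj_R. ring.
Qed.

Lemma inner_f_even (y : vec) (alpha : R) (n : nat) :
  inner y (f_even alpha n) = Cplus (Cmult (y (2 * n)%nat) (RtoC alpha)) (Cmult (y (2 * n + 1)%nat) (RtoC (sa alpha))).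
Proof.
  rewrite (inner_two _ _ (2 * n) (2 * n + 1)); [ | lia | ].
  - unfold f_even. rewrite Nat.eqb_refl. replace (Nat.eqb (2 * n + 1) (2 * n)) with false.
    rewrite Nat.eqb_refl, !Cconj_R. reflexivity. symmetry; apply Nat.eqb_neq; lia.
  - intros k H1 H2. unfold f_even. apply Nat.eqb_neq in H1, H2. rewrite H1, H2, Cconj_R. ring.
Qed.

Definition vsub (x y : vec) : vec := vadd x (vscal (RtoC (-1)) y).
Definition ent (T : op) (k m : nat) : C := T (e k) m.

Lemma vec_ext (x y : vec) : (forall k, x k = y k) -> x = y.
Proof. intros; apply functional_extensionality; auto. Qed.

Section BO.
Variable T : op.
Hypothesis HT : bounded_op T.

Lemma bo_l2 x : l2 x -> l2 (T x).
Proof. apply HT. Qed.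

Lemma bo_lin x y c : l2 x -> l2 y -> T (vadd x (vscal c y)) = vadd (T x) (vscal c (T y)).
Proof. apply HT. Qed.

Lemma bo_nl2 x : ~ l2 x -> T x = vzero.
Proof. apply HT. Qed.

Lemma bo_zero : T vzero = vzero.
Proof.
  pose proof (bo_lin vzero vzero (RtoC (-1)) l2_vzero l2_vzero) as H.
  replace (vadd vzero (vscal (RtoC (-1)) vzero)) with vzero in H
    by (apply vec_ext; intros; unfold vadd, vscal, vzero; ring).
  apply vec_ext; intros k. apply (f_equal (fun v => v k)) in H. unfold vadd, vscal in H.
  unfold vzero. change (T vzero k = Cplus (T vzero k) (Cmult (RtoC (-1)) (T vzero k))) in H.
  rewrite H at 1. ring.
Qed.

Lemma bo_add x y : l2 x -> l2 y -> T (vadd x y) = vadd (T x) (T y).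
Proof.
  intros Hx Hy. pose proof (bo_lin x y (RtoC 1) Hx Hy) as H.
  replace (vscal (RtoC 1) y) with y in H by (apply vec_ext; intros; unfold vscal; ring).
  rewrite H. apply vec_ext; intros; unfold vadd, vscal; ring.
Qed.

Lemma bo_scal x c : l2 x -> T (vscal c x) = vscal c (T x).
Proof.
  intros Hx. pose proof (bo_lin vzero x c l2_vzero Hx) as H.
  replace (vadd vzero (vscal c x)) with (vscal c x) in H by (apply vec_ext; intros; unfold vadd, vzero; ring).
  rewrite H, bo_zero. apply vec_ext; intros; unfold vadd, vzero; ring.
Qed.

Lemma bo_sub x y : l2 x -> l2 y -> T (vsub x y) = vsub (T x) (T y).
Proof. intros; unfold vsub; apply bo_lin; auto. Qed.

Lemma bo_bound : exists M, 0 <= M /\ forall x, l2 x -> norm2 (T x) <= M * norm2 x.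
Proof.
  destruct HT as (_ & _ & _ & M & HM). exists (Rmax M 0). split. apply Rmax_r.
  intros x Hx. eapply Rle_trans. apply HM; auto. apply Rmult_le_compat_r. apply norm2_nonneg. apply Rmax_l.
Qed.

Lemma ent_bound M : (forall x, l2 x -> norm2 (T x) <= M * norm2 x) -> forall k m, Cmod (ent T k m) <= M.
Proof.
  intros HM k m. unfold ent. eapply Rle_trans. apply coord_le_norm, bo_l2, l2_e.
  rewrite <- (Rmult_1_r M), <- (norm2_e k). apply HM, l2_e.
Qed.

End BO.

Lemma A0_ent (T : op) : A0 T -> forall k m, (k / 2)%nat <> (m / 2)%nat -> ent T k m = RtoC 0.
Proof.
  intros [_ H] k m Hkm. destruct (Ceq_dec (ent T k m) (RtoC 0)) as [E|E]; auto.
  exfalso. specialize (H k m). rewrite inner_e_r in H. destruct (H E) as (n & H1 & H2).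
  apply in_block_div in H1, H2. congruence.
Qed.

Definition trunc (N : nat) (x : vec) : vec := fun k => if (k <? N)%nat then x k else RtoC 0.

Lemma trunc_S N x : trunc (S N) x = vadd (trunc N x) (vscal (x N) (e N)).
Proof.
  apply vec_ext; intros k. unfold trunc, vadd, vscal, e.
  destruct (Nat.ltb_spec k (S N)), (Nat.ltb_spec k N), (Nat.eqb_spec k N); subst; try lia; ring.
Qed.

Lemma trunc_0 x : trunc 0 x = vzero.
Proof. apply vec_ext; intros k. reflexivity. Qed.

Lemma l2_trunc N x : l2 (trunc N x).
Proof.
  induction N. rewrite trunc_0. apply l2_vzero.
  rewrite trunc_S. apply l2_vadd; auto. apply l2_vscal, l2_e.
Qed.

Fixpoint csum (f : nat -> C) (N : nat) : C :=
  match N with O => RtoC 0 | S N => Cplus (csum f N) (f N) end.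

Lemma T_trunc (T : op) (HT : bounded_op T) N x j :
  T (trunc N x) j = csum (fun k => Cmult (x k) (ent T k j)) N.
Proof.
  induction N; simpl.
  - rewrite trunc_0, bo_zero by auto. reflexivity.
  - rewrite trunc_S, bo_add, bo_scal; auto using l2_trunc, l2_e, l2_vscal.
    unfold vadd, vscal. rewrite IHN. reflexivity.
Qed.

Lemma csum_two (f : nat -> C) (p N : nat) : (p + 1 < N)%nat ->
  (forall k, k <> p -> k <> (p + 1)%nat -> f k = RtoC 0) -> csum f N = Cplus (f p) (f (p + 1)%nat).
Proof.
  intros HN Hf.
  assert (G : forall N, csum f N = Cplus (if (p <? N)%nat then f p else RtoC 0) (if (p + 1 <? N)%nat then f (p+1)%nat else RtoC 0)).
  { induction N0; simpl. apply C_ext; simpl; ring.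
    rewrite IHN0. destruct (Nat.eqb_spec N0 p); [subst|].
    - destruct (Nat.ltb_spec p p), (Nat.ltb_spec p (S p)), (Nat.ltb_spec (p+1) p), (Nat.ltb_spec (p+1) (S p)); try lia. ring.
    - destruct (Nat.eqb_spec N0 (p+1)); [subst|].
      + destruct (Nat.ltb_spec p (p+1)), (Nat.ltb_spec p (S (p+1))), (Nat.ltb_spec (p+1) (p+1)), (Nat.ltb_spec (p+1) (S (p+1))); try lia. ring.
      + rewrite (Hf N0) by auto.
        destruct (Nat.ltb_spec p N0), (Nat.ltb_spec p (S N0)), (Nat.ltb_spec (p+1) N0), (Nat.ltb_spec (p+1) (S N0)); try lia; ring. }
  rewrite G. destruct (Nat.ltb_spec p N), (Nat.ltb_spec (p+1) N); try lia. reflexivity.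
Qed.

Lemma sum_tail (b : nat -> R) (M : nat) : forall n, (M <= n)%nat ->
  sum_f_R0 (fun k => if (k <? S M)%nat then 0 else b k) n = sum_f_R0 b n - sum_f_R0 b M.
Proof.
  intros n Hn. induction Hn.
  - assert (G : forall n, (n <= M)%nat -> sum_f_R0 (fun k => if (k <? S M)%nat then 0 else b k) n = 0).
    { induction n; intros Hn; simpl. destruct (Nat.ltb_spec 0 (S M)); try lia; auto.
      rewrite IHn by lia. destruct (Nat.ltb_spec (S n) (S M)); try lia; ring. }
    rewrite G by lia. ring.
  - simpl. rewrite IHHn. destruct (Nat.ltb_spec (S m) (S M)); try lia. ring.
Qed.

Lemma tail_small (x : vec) : l2 x -> forall eps, 0 < eps -> exists N0, forall N, (N0 <= N)%nat ->
  norm2 (vsub x (trunc N x)) <= eps.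
Proof.
  intros [l Hl] eps Heps. pose proof Hl as Hl'. apply is_series_Reals in Hl.
  destruct (Hl (eps ^ 2) ltac:(nra)) as [N1 HN1]. exists (S N1). intros N HN.
  destruct N as [|M]; [lia|].
  assert (E : forall k, Cmod (vsub x (trunc (S M) x) k) ^ 2 = if (k <? S M)%nat then 0 else Cmod (x k) ^ 2).
  { intros k. unfold vsub, vadd, vscal, trunc. destruct (Nat.ltb_spec k (S M)).
    - replace (Cplus (x k) (Cmult (RtoC (-1)) (x k))) with (RtoC 0) by ring. rewrite Cmod_0. ring.
    - replace (Cplus (x k) (Cmult (RtoC (-1)) (RtoC 0))) with (x k) by ring. reflexivity. }
  assert (Hs : is_series (fun k => if (k <? S M)%nat then 0 else Cmod (x k) ^ 2) (l - sum_f_R0 (fun k => Cmod (x k) ^ 2) M)).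
  { apply is_series_Reals. intros ep Hep. destruct (Hl ep Hep) as [N2 HN2]. exists (N2 + M)%nat.
    intros n Hn. rewrite sum_tail by lia. specialize (HN2 n ltac:(lia)). unfold Rdist in *.
    replace (sum_f_R0 (fun k => Cmod (x k) ^ 2) n - sum_f_R0 (fun k => Cmod (x k) ^ 2) M -
        (l - sum_f_R0 (fun k => Cmod (x k) ^ 2) M)) with (sum_f_R0 (fun k => Cmod (x k) ^ 2) n - l) by ring.
    auto. }
  unfold norm2. rewrite (Series_ext _ _ E). erewrite is_series_unique by exact Hs.
  specialize (HN1 M ltac:(lia)). unfold Rdist in HN1. apply Rabs_def2 in HN1.
  rewrite <- (sqrt_pow2 eps) by lra. apply sqrt_le_1_alt. lra.
Qed.

Lemma Cmod_small_zero (c : C) : (forall eps, 0 < eps -> Cmod c <= eps) -> c = RtoC 0.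
Proof.
  intros H. apply Cmod_eq_0. pose proof (Cmod_ge_0 c).
  destruct (Req_dec (Cmod c) 0); auto. specialize (H (Cmod c / 2) ltac:(lra)). lra.
Qed.

Definition blockform (m : nat -> nat -> C) (x : vec) (j : nat) : C :=
  Cplus (Cmult (x (2 * (j / 2))%nat) (m (2 * (j / 2))%nat j))
        (Cmult (x (2 * (j / 2) + 1)%nat) (m (2 * (j / 2) + 1)%nat j)).

Lemma block_rep (T : op) : A0 T -> forall x, l2 x -> forall j, T x j = blockform (ent T) x j.
Proof.
  intros HA x Hx j. pose proof (proj1 HA) as HT.
  destruct (bo_bound T HT) as (M & HM0 & HM).
  set (p := (2 * (j / 2))%nat).
  assert (Htr : forall N, (p + 1 < N)%nat -> T (trunc N x) j = blockform (ent T) x j).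
  { intros N HN. rewrite T_trunc by auto. rewrite (csum_two _ p N HN). reflexivity.
    intros k Hk1 Hk2. rewrite (A0_ent T HA k j). ring.
    pose proof (div2_cases k). pose proof (div2_cases j). unfold p in *. lia. }
  assert (D : forall eps, 0 < eps -> Cmod (Cplus (T x j) (Cmult (RtoC (-1)) (blockform (ent T) x j))) <= eps).
  { intros eps Heps. destruct (tail_small x Hx (eps / (M + 1))) as [N0 HN0].
    apply Rdiv_lt_0_compat; lra.
    set (N := (N0 + p + 2)%nat). rewrite <- (Htr N) by (unfold N; lia).
    change (Cplus (T x j) (Cmult (RtoC (-1)) (T (trunc N x) j))) with (vsub (T x) (T (trunc N x)) j).
    rewrite <- bo_sub by auto using l2_trunc.
    eapply Rle_trans. apply coord_le_norm, bo_l2; auto. unfold vsub. apply l2_vadd; auto. apply l2_vscal, l2_trunc.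
    eapply Rle_trans. apply HM. unfold vsub. apply l2_vadd; auto. apply l2_vscal, l2_trunc.
    specialize (HN0 N ltac:(unfold N; lia)).
    apply Rle_trans with (M * (eps / (M + 1))). apply Rmult_le_compat_l; auto.
    apply Rle_trans with ((M + 1) * (eps / (M + 1))). apply Rmult_le_compat_r. apply Rlt_le, Rdiv_lt_0_compat; lra. lra.
    right. field. lra. }
  apply Cmod_small_zero in D.
  replace (T x j) with (Cplus (Cplus (T x j) (Cmult (RtoC (-1)) (blockform (ent T) x j))) (blockform (ent T) x j)) by ring.
  rewrite D. ring.
Qed.

Definition blkop (m : nat -> nat -> C) : op := fun x =>
  if excluded_middle_informative (l2 x) then blockform m x else vzero.

Definition mbound (m : nat -> nat -> C) (B : R) : Prop := forall k j, Cmod (m k j) <= B.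

Lemma Cmod_lin2_sq (a b u v : C) (B : R) : Cmod a <= B -> Cmod b <= B ->
  Cmod (Cplus (Cmult u a) (Cmult v b)) ^ 2 <= 2 * B ^ 2 * (Cmod u ^ 2 + Cmod v ^ 2).
Proof.
  intros Ha Hb. eapply Rle_trans. apply Cmod_sq_add. rewrite !Cmod_sq_mult.
  pose proof (Cmod_ge_0 a). pose proof (Cmod_ge_0 b).
  assert (Cmod a ^ 2 <= B ^ 2) by (apply pow_incr; lra).
  assert (Cmod b ^ 2 <= B ^ 2) by (apply pow_incr; lra).
  pose proof (Cmod_sq_nonneg u). pose proof (Cmod_sq_nonneg v). nra.
Qed.

Lemma blockform_bound m B x : mbound m B -> l2 x ->
  l2 (blockform m x) /\ norm2 (blockform m x) <= sqrt (2 * (2 * B ^ 2)) * norm2 x.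
Proof.
  intros Hm Hx. apply block_bound; auto. pose proof (pow2_ge_0 B); lra.
  intros j. unfold blockform. apply Cmod_lin2_sq; apply Hm.
Qed.

Lemma blockform_lin m x y c : blockform m (vadd x (vscal c y)) = vadd (blockform m x) (vscal c (blockform m y)).
Proof. apply vec_ext; intros j. unfold blockform, vadd, vscal. ring. Qed.

Lemma blkop_bounded m B : mbound m B -> bounded_op (blkop m).
Proof.
  intros Hm. unfold bounded_op, blkop. split; [|split; [|split]].
  - intros x Hx. destruct (excluded_middle_informative (l2 x)); tauto.
  - intros x Hx. destruct (excluded_middle_informative (l2 x)); try tauto. apply (blockform_bound m B); auto.
  - intros x y c Hx Hy. pose proof (l2_vadd _ _ Hx (l2_vscal c _ Hy)).
    destruct (excluded_middle_informative (l2 (vadd x (vscal c y)))); try tauto.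
    destruct (excluded_middle_informative (l2 x)); try tauto.
    destruct (excluded_middle_informative (l2 y)); try tauto. apply blockform_lin.
  - exists (sqrt (2 * (2 * B ^ 2))). intros x Hx.
    destruct (excluded_middle_informative (l2 x)); try tauto. apply (blockform_bound m B); auto.
Qed.

Lemma blkop_l2 m x : l2 x -> blkop m x = blockform m x.
Proof. intros Hx. unfold blkop. destruct (excluded_middle_informative (l2 x)); tauto. Qed.

Lemma blockform_e m k j : blockform m (e k) j = if (k / 2 =? j / 2)%nat then m k j else RtoC 0.
Proof.
  unfold blockform, e. pose proof (div2_cases k). pose proof (div2_cases j).
  destruct (Nat.eqb_spec (k / 2) (j / 2)) as [E|E].
  - destruct H as [H|H].
    + rewrite Nat.eqb_sym, (proj2 (Nat.eqb_eq _ _)) by lia.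
      replace (Nat.eqb (2 * (j / 2) + 1) k) with false by (symmetry; apply Nat.eqb_neq; lia).
      replace (2 * (j / 2))%nat with k by lia. ring.
    + replace (Nat.eqb (2 * (j / 2)) k) with false by (symmetry; apply Nat.eqb_neq; lia).
      rewrite (proj2 (Nat.eqb_eq (2 * (j / 2) + 1) k)) by lia.
      replace (2 * (j / 2) + 1)%nat with k by lia. ring.
  - replace (Nat.eqb (2 * (j / 2)) k) with false by (symmetry; apply Nat.eqb_neq; lia).
    replace (Nat.eqb (2 * (j / 2) + 1) k) with false by (symmetry; apply Nat.eqb_neq; lia). ring.
Qed.

Lemma ent_blkop m k j : ent (blkop m) k j = if (k / 2 =? j / 2)%nat then m k j else RtoC 0.
Proof. unfold ent. rewrite blkop_l2 by apply l2_e. apply blockform_e. Qed.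

Lemma blkop_A0 m B : mbound m B -> A0 (blkop m).
Proof.
  intros Hm. split. apply (blkop_bounded m B Hm).
  intros k j H. rewrite inner_e_r in H. change (ent (blkop m) k j <> RtoC 0) in H.
  rewrite ent_blkop in H. destruct (Nat.eqb_spec (k / 2) (j / 2)) as [E|E]; try tauto.
  exists (k / 2)%nat. split; apply in_block_div; auto.
Qed.

Lemma A0_blk (T : op) : A0 T -> T = blkop (ent T).
Proof.
  intros HA. apply functional_extensionality; intros x. unfold blkop.
  destruct (excluded_middle_informative (l2 x)) as [Hx|Hx].
  - apply vec_ext; intros j. apply block_rep; auto.
  - apply (bo_nl2 T (proj1 HA)); auto.
Qed.

Lemma blockform_ext m1 m2 x : (forall k j, (k / 2 = j / 2)%nat -> m1 k j = m2 k j) ->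
  blockform m1 x = blockform m2 x.
Proof.
  intros H. apply vec_ext; intros j. unfold blockform. rewrite !H. reflexivity.
  rewrite div_2n1; auto. rewrite div_2n; auto.
Qed.

Lemma blkop_ext m1 m2 : (forall k j, (k / 2 = j / 2)%nat -> m1 k j = m2 k j) -> blkop m1 = blkop m2.
Proof.
  intros H. apply functional_extensionality; intros x. unfold blkop.
  destruct (excluded_middle_informative (l2 x)); auto. apply blockform_ext; auto.
Qed.

Lemma A0_ext (T U : op) : A0 T -> A0 U -> (forall k j, (k / 2 = j / 2)%nat -> ent T k j = ent U k j) -> T = U.
Proof. intros HT HU H. rewrite (A0_blk T HT), (A0_blk U HU). apply blkop_ext; auto. Qed.

Lemma A0_mbound (T : op) : A0 T -> exists B, mbound (ent T) B.
Proof.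
  intros HA. destruct (bo_bound T (proj1 HA)) as (M & _ & HM). exists M. intros k j. apply (ent_bound T (proj1 HA) M HM).
Qed.

Lemma mbound_add m1 m2 B1 B2 : mbound m1 B1 -> mbound m2 B2 -> mbound (fun k j => Cplus (m1 k j) (m2 k j)) (B1 + B2).
Proof. intros H1 H2 k j. eapply Rle_trans. apply Cmod_triangle. specialize (H1 k j). specialize (H2 k j). lra. Qed.

Lemma mbound_scal c m B : mbound m B -> mbound (fun k j => Cmult c (m k j)) (Cmod c * B).
Proof. intros H k j. rewrite Cmod_mult. apply Rmult_le_compat_l. apply Cmod_ge_0. auto. Qed.

Definition mprod (mT mU : nat -> nat -> C) (k j : nat) : C :=
  Cplus (Cmult (mU k (2 * (j / 2))%nat) (mT (2 * (j / 2))%nat j))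
        (Cmult (mU k (2 * (j / 2) + 1)%nat) (mT (2 * (j / 2) + 1)%nat j)).

Lemma mbound_prod mT mU B1 B2 : mbound mT B1 -> mbound mU B2 -> mbound (mprod mT mU) (2 * B1 * B2).
Proof.
  intros H1 H2 k j. unfold mprod. eapply Rle_trans. apply Cmod_triangle. rewrite !Cmod_mult.
  pose proof (Cmod_ge_0 (mU k (2 * (j / 2))%nat)). pose proof (Cmod_ge_0 (mU k (2 * (j / 2) + 1)%nat)).
  pose proof (Cmod_ge_0 (mT (2 * (j / 2))%nat j)). pose proof (Cmod_ge_0 (mT (2 * (j / 2) + 1)%nat j)).
  pose proof (H1 (2 * (j / 2))%nat j). pose proof (H1 (2 * (j / 2) + 1)%nat j).
  pose proof (H2 k (2 * (j / 2))%nat). pose proof (H2 k (2 * (j / 2) + 1)%nat).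
  assert (0 <= B1) by (pose proof (Cmod_ge_0 (mT 0%nat 0%nat)); pose proof (H1 0%nat 0%nat); lra).
  assert (0 <= B2) by (pose proof (Cmod_ge_0 (mU 0%nat 0%nat)); pose proof (H2 0%nat 0%nat); lra).
  nra.
Qed.

Lemma opadd_blk m1 m2 : opadd (blkop m1) (blkop m2) = blkop (fun k j => Cplus (m1 k j) (m2 k j)).
Proof.
  apply functional_extensionality; intros x. unfold opadd, blkop.
  destruct (excluded_middle_informative (l2 x)).
  - apply vec_ext; intros j. unfold vadd, blockform. ring.
  - apply vec_ext; intros j. unfold vadd, vzero. ring.
Qed.

Lemma opscal_blk c m : opscal c (blkop m) = blkop (fun k j => Cmult c (m k j)).
Proof.
  apply functional_extensionality; intros x. unfold opscal, blkop.
  destruct (excluded_middle_informative (l2 x)).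
  - apply vec_ext; intros j. unfold vscal, blockform. ring.
  - apply vec_ext; intros j. unfold vscal, vzero. ring.
Qed.

Lemma blkop_nl2 m x : ~ l2 x -> blkop m x = vzero.
Proof. intros Hx. unfold blkop. destruct (excluded_middle_informative (l2 x)); tauto. Qed.

Lemma blkop_zero m : blkop m vzero = vzero.
Proof. rewrite blkop_l2 by apply l2_vzero. apply vec_ext; intros j. unfold blockform, vzero. ring. Qed.

Lemma opcomp_blk mT mU B : mbound mU B -> opcomp (blkop mT) (blkop mU) = blkop (mprod mT mU).
Proof.
  intros HB. apply functional_extensionality; intros x. unfold opcomp.
  destruct (excluded_middle_informative (l2 x)) as [Hx|Hx].
  - rewrite (blkop_l2 mU) by auto. rewrite (blkop_l2 mT) by (apply (blockform_bound mU B); auto).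
    rewrite blkop_l2 by auto. apply vec_ext; intros j. unfold blockform, mprod.
    rewrite div_2n, div_2n1. ring.
  - rewrite (blkop_nl2 mU x Hx), (blkop_nl2 _ x Hx). apply blkop_zero.
Qed.

Definition xind (X : nat -> Prop) (n : nat) : C := if excluded_middle_informative (X n) then RtoC 1 else RtoC 0.

Definition pam (X : nat -> Prop) (k j : nat) : C := if (k =? j)%nat then xind X (j / 2) else RtoC 0.

Lemma PA_blk X : PA X = blkop (pam X).
Proof.
  apply functional_extensionality; intros x. unfold PA, blkop.
  destruct (excluded_middle_informative (l2 x)) as [Hx|Hx]; auto.
  apply vec_ext; intros j. unfold blockform, pam, xind.
  pose proof (div2_cases j).
  destruct (Nat.eqb_spec (2 * (j / 2))%nat j) as [E1|E1], (Nat.eqb_spec (2 * (j / 2) + 1)%nat j) as [E2|E2]; try lia.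
  - rewrite E1. destruct (excluded_middle_informative (X (j / 2)%nat)); ring.
  - rewrite E2. destruct (excluded_middle_informative (X (j / 2)%nat)); ring.
Qed.

Lemma mbound_pam X : mbound (pam X) 1.
Proof.
  intros k j. unfold pam, xind. destruct (Nat.eqb k j); [destruct (excluded_middle_informative (X (j / 2)%nat))|];
  rewrite ?Cmod_1, ?Cmod_0; lra.
Qed.

Lemma compact_ent_small (R0 : op) : A0 R0 -> compact_op R0 ->
  forall eps, 0 < eps -> exists N, forall k j, (N <= k)%nat -> Cmod (ent R0 k j) <= eps.
Proof.
  intros HA [HB Hc] eps Heps. apply NNPP; intros Hno.
  assert (Hg : forall N, exists kj : nat * nat, (N <= fst kj)%nat /\ eps < Cmod (ent R0 (fst kj) (snd kj))).
  { intros N. apply NNPP; intros H. apply Hno. exists N. intros k j Hk.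
    apply Rnot_lt_le. intros Hlt. apply H. exists (k, j). simpl. auto. }
  set (g := fun N => proj1_sig (constructive_indefinite_description _ (Hg N))).
  assert (Hgp : forall N, (N <= fst (g N))%nat /\ eps < Cmod (ent R0 (fst (g N)) (snd (g N)))).
  { intros N. unfold g. destruct (constructive_indefinite_description _ (Hg N)); auto. }
  set (ks := fix ks (i : nat) : nat * nat := match i with O => g 0%nat | S i => g (fst (ks i) + 2)%nat end).
  assert (Hks : forall i i', (i < i')%nat -> (fst (ks i) + 2 <= fst (ks i'))%nat).
  { intros i i' Hii. induction Hii.
    - simpl. apply Hgp.
    - simpl. pose proof (proj1 (Hgp (fst (ks m) + 2)%nat)). lia. }
  assert (Hkb : forall i, eps < Cmod (ent R0 (fst (ks i)) (snd (ks i)))).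
  { intros [|i]; apply Hgp. }
  destruct (Hc (fun i => e (fst (ks i)))) as (phi & Hphi & HC).
  { intros i. split. apply l2_e. rewrite norm2_e. lra. }
  destruct (HC (eps / 2) ltac:(lra)) as [N0 HN0].
  specialize (HN0 N0 (S N0) ltac:(lia) ltac:(lia)).
  set (k1 := fst (ks (phi N0))). set (j1 := snd (ks (phi N0))). set (k2 := fst (ks (phi (S N0)))).
  assert (H12 : (k1 + 2 <= k2)%nat) by (apply Hks, Hphi).
  assert (Hbig : eps < Cmod (ent R0 k1 j1)) by apply Hkb.
  assert (Hblk : (k1 / 2)%nat = (j1 / 2)%nat).
  { destruct (Nat.eq_dec (k1 / 2) (j1 / 2)); auto. rewrite (A0_ent R0 HA k1 j1 n), Cmod_0 in Hbig. lra. }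
  assert (Hz : ent R0 k2 j1 = RtoC 0).
  { apply (A0_ent R0 HA). pose proof (div2_cases k1). pose proof (div2_cases k2). lia. }
  assert (Hco := coord_le_norm (vadd (R0 (e k1)) (vscal (RtoC (-1)) (R0 (e k2)))) j1).
  unfold vadd, vscal in Hco. fold (ent R0 k1 j1) in Hco. fold (ent R0 k2 j1) in Hco.
  rewrite Hz in Hco. replace (Cplus (ent R0 k1 j1) (Cmult (RtoC (-1)) (RtoC 0))) with (ent R0 k1 j1) in Hco by ring.
  assert (Cmod (ent R0 k1 j1) <= eps / 2).
  { eapply Rle_trans. apply Hco. apply l2_vadd. apply HB, l2_e. apply l2_vscal, HB, l2_e. apply HN0. }
  lra.
Qed.

Definition strict (th : nat -> nat) : Prop := forall n, (th n < th (S n))%nat.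

Lemma strict_lt th : strict th -> forall a b, (a < b)%nat -> (th a < th b)%nat.
Proof. intros H a b Hab. induction Hab. apply H. specialize (H m). lia. Qed.

Lemma strict_ge th : strict th -> forall n, (n <= th n)%nat.
Proof. intros H n. induction n. lia. specialize (H n). lia. Qed.

Lemma strict_le th : strict th -> forall a b, (a <= b)%nat -> (th a <= th b)%nat.
Proof. intros H a b Hab. destruct (Nat.eq_dec a b). subst; lia. pose proof (strict_lt th H a b). lia. Qed.

Definition Cauchy_R (s : nat -> R) : Prop :=
  forall eta, 0 < eta -> exists I, forall a b, (I <= a)%nat -> (I <= b)%nat -> Rabs (s a - s b) <= eta.

Definition Cauchy_C (s : nat -> C) : Prop :=
  forall eta, 0 < eta -> exists I, forall a b, (I <= a)%nat -> (I <= b)%nat ->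
    Cmod (Cplus (s a) (Cmult (RtoC (-1)) (s b))) <= eta.

Lemma Cauchy_R_sub s th : Cauchy_R s -> strict th -> Cauchy_R (fun n => s (th n)).
Proof.
  intros H Hth eta Heta. destruct (H eta Heta) as [I HI]. exists I. intros a b Ha Hb.
  apply HI; pose proof (strict_ge th Hth a); pose proof (strict_ge th Hth b); lia.
Qed.

Lemma Cauchy_C_sub s th : Cauchy_C s -> strict th -> Cauchy_C (fun n => s (th n)).
Proof.
  intros H Hth eta Heta. destruct (H eta Heta) as [I HI]. exists I. intros a b Ha Hb.
  apply HI; pose proof (strict_ge th Hth a); pose proof (strict_ge th Hth b); lia.
Qed.

Lemma BW_R (r : nat -> R) (B : R) : (forall i, Rabs (r i) <= B) ->
  exists th, strict th /\ Cauchy_R (fun n => r (th n)).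
Proof.
  intros Hr.
  destruct (Bolzano_Weierstrass r (fun c => -B <= c <= B) (compact_P3 (-B) B)) as [l Hl].
  { intros i. specialize (Hr i). apply Rabs_le_between in Hr. auto. }
  assert (Hex : forall N i : nat, exists p, (N <= p)%nat /\ Rabs (r p - l) < / (INR i + 1)).
  { intros N i. assert (Hpos : 0 < / (INR i + 1)) by (apply Rinv_0_lt_compat; pose proof (pos_INR i); lra).
    destruct (Hl (fun c => Rabs (c - l) < / (INR i + 1)) N) as [p [Hp1 Hp2]].
    - exists (mkposreal _ Hpos). intros y Hy. exact Hy.
    - exists p; auto. }
  set (ch := fun N i => proj1_sig (constructive_indefinite_description _ (Hex N i))).
  assert (Hch : forall N i, (N <= ch N i)%nat /\ Rabs (r (ch N i) - l) < / (INR i + 1)).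
  { intros N i. unfold ch. destruct (constructive_indefinite_description _ (Hex N i)); auto. }
  set (th := fix th (i : nat) : nat := match i with O => ch 0%nat 0%nat | S i => ch (S (th i)) (S i) end).
  exists th. split.
  - intros n. simpl. pose proof (proj1 (Hch (S (th n)) (S n))). lia.
  - assert (Hc : forall i, Rabs (r (th i) - l) < / (INR i + 1)) by (intros [|i]; apply Hch).
    intros eta Heta. destruct (archimed_cor1 (eta / 2) ltac:(lra)) as [I [HI1 HI2]].
    exists I. intros a b Ha Hb.
    assert (Ea : / (INR a + 1) <= / INR I).
    { apply Rinv_le_contravar. apply lt_0_INR; lia. apply le_INR in Ha. lra. }
    assert (Eb : / (INR b + 1) <= / INR I).
    { apply Rinv_le_contravar. apply lt_0_INR; lia. apply le_INR in Hb. lra. }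
    pose proof (Hc a). pose proof (Hc b).
    apply Rabs_def2 in H. apply Rabs_def2 in H0. apply Rabs_le. split; lra.
Qed.

Lemma Cmod_le_re_im (z : C) : Cmod z <= Rabs (fst z) + Rabs (snd z).
Proof.
  unfold Cmod. apply Rsqr_incr_0_var.
  - rewrite Rsqr_sqrt by nra. unfold Rsqr. destruct z as [a b]; simpl.
    pose proof (Rabs_pos a). pose proof (Rabs_pos b).
    assert (a * a = Rabs a * Rabs a) by (rewrite <- Rabs_mult; rewrite Rabs_pos_eq; nra).
    assert (b * b = Rabs b * Rabs b) by (rewrite <- Rabs_mult; rewrite Rabs_pos_eq; nra). nra.
  - pose proof (Rabs_pos (fst z)). pose proof (Rabs_pos (snd z)). lra.
Qed.

Lemma im_le_Cmod' (c : C) : Rabs (snd c) <= Cmod c.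
Proof.
  unfold Cmod. rewrite <- sqrt_Rsqr_abs. apply sqrt_le_1_alt. unfold Rsqr. destruct c; simpl. nra.
Qed.

Lemma BW_C (s : nat -> C) (B : R) : (forall i, Cmod (s i) <= B) ->
  exists th, strict th /\ Cauchy_C (fun n => s (th n)).
Proof.
  intros Hs.
  destruct (BW_R (fun i => fst (s i)) B) as [th1 [Hth1 H1]].
  { intros i. eapply Rle_trans. apply re_le_Cmod. apply Hs. }
  destruct (BW_R (fun i => snd (s (th1 i))) B) as [th2 [Hth2 H2]].
  { intros i. eapply Rle_trans. apply im_le_Cmod'. apply Hs. }
  exists (fun n => th1 (th2 n)). split.
  - intros n. apply strict_lt; auto.
  - intros eta Heta. pose proof (Cauchy_R_sub _ _ H1 Hth2) as H1'.
    destruct (H1' (eta / 2) ltac:(lra)) as [I1 HI1]. destruct (H2 (eta / 2) ltac:(lra)) as [I2 HI2].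
    exists (I1 + I2)%nat. intros a b Ha Hb. eapply Rle_trans. apply Cmod_le_re_im.
    specialize (HI1 a b ltac:(lia) ltac:(lia)). specialize (HI2 a b ltac:(lia) ltac:(lia)).
    simpl in *. replace (fst (s (th1 (th2 a))) + (-1 * fst (s (th1 (th2 b))) - 0 * snd (s (th1 (th2 b)))))
      with (fst (s (th1 (th2 a))) - fst (s (th1 (th2 b)))) by ring.
    replace (snd (s (th1 (th2 a))) + (-1 * snd (s (th1 (th2 b))) + 0 * fst (s (th1 (th2 b)))))
      with (snd (s (th1 (th2 a))) - snd (s (th1 (th2 b)))) by ring. lra.
Qed.

Lemma diag_extract (u : nat -> vec) (B : R) : (forall i k, Cmod (u i k) <= B) ->
  exists phi, strict phi /\ forall k, Cauchy_C (fun n => u (phi n) k).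
Proof.
  intros Hu.
  assert (Hex : forall (ps : nat -> nat) (k : nat), exists th, strict th /\ Cauchy_C (fun n => u (ps (th n)) k)).
  { intros ps k. apply (BW_C (fun i => u (ps i) k) B). intros; apply Hu. }
  set (ext := fun ps k => proj1_sig (constructive_indefinite_description _ (Hex ps k))).
  assert (Hext : forall ps k, strict (ext ps k) /\ Cauchy_C (fun n => u (ps (ext ps k n)) k)).
  { intros ps k. unfold ext. destruct (constructive_indefinite_description _ (Hex ps k)); auto. }
  set (psi := fix psi (j : nat) : nat -> nat := match j with O => fun n => n | S j => fun n => psi j (ext (psi j) j n) end).
  assert (Hpsi : forall j, strict (psi j)).
  { induction j; simpl. intros n; lia. intros n. apply strict_lt; auto. apply Hext. }
  assert (Hrho : forall k j, (S k <= j)%nat -> forall n, exists r, (n <= r)%nat /\ psi j n = psi (S k) r).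
  { intros k j Hj. induction Hj; intros n.
    - exists n. split; auto.
    - simpl. destruct (IHHj (ext (psi m) m n)) as [r [Hr1 Hr2]]. exists r. split; auto.
      pose proof (strict_ge _ (proj1 (Hext (psi m) m)) n). lia. }
  exists (fun n => psi (S n) n). split.
  - intros n. change (psi (S n) n < psi (S n) (ext (psi (S n)) (S n) (S n)))%nat.
    apply (strict_lt _ (Hpsi (S n))).
    pose proof (strict_ge _ (proj1 (Hext (psi (S n)) (S n))) (S n)). lia.
  - intros k eta Heta.
    destruct (proj2 (Hext (psi k) k) eta Heta) as [I HI].
    exists (I + S k)%nat. intros a b Ha Hb.
    destruct (Hrho k (S a) ltac:(lia) a) as [ra [Hra1 Hra2]].
    destruct (Hrho k (S b) ltac:(lia) b) as [rb [Hrb1 Hrb2]].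
    cbv beta. rewrite Hra2, Hrb2. simpl. apply HI; lia.
Qed.

Lemma finite_cauchy (s : nat -> vec) : (forall k, Cauchy_C (fun n => s n k)) ->
  forall M eta, 0 < eta -> exists I, forall a b, (I <= a)%nat -> (I <= b)%nat -> forall k, (k < M)%nat ->
    Cmod (Cplus (s a k) (Cmult (RtoC (-1)) (s b k))) <= eta.
Proof.
  intros H M eta Heta. induction M.
  - exists 0%nat. intros; lia.
  - destruct IHM as [I1 HI1]. destruct (H M eta Heta) as [I2 HI2]. exists (I1 + I2)%nat.
    intros a b Ha Hb k Hk. destruct (Nat.eq_dec k M). subst. apply HI2; lia. apply HI1; lia.
Qed.

Lemma is_series_const_fin (M : nat) (d : R) : is_series (fun j => if (j <? M)%nat then d else 0) (INR M * d).
Proof.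
  induction M.
  - simpl. rewrite Rmult_0_l. apply (is_series_single (fun _ => 0) 0). auto.
  - assert (H1 : is_series (fun j => if (j =? M)%nat then d else 0) d).
    { pose proof (is_series_single (fun j => if (j =? M)%nat then d else 0) M) as H.
      cbv beta in H. rewrite Nat.eqb_refl in H. apply H. intros k Hk; destruct (Nat.eqb_spec k M); tauto. }
    pose proof (is_series_plus _ _ _ _ IHM H1) as H2.
    replace (INR (S M) * d) with (INR M * d + d) by (rewrite S_INR; ring).
    eapply is_series_ext. 2: exact H2.
    intros j. change (plus ?x ?y) with (x + y). cbv beta. destruct (Nat.ltb_spec j M), (Nat.eqb_spec j M), (Nat.ltb_spec j (S M)); try lia; try ring; try apply Rplus_0_r; apply Rplus_0_l.
Qed.

Lemma Series_sq_le1 (x : vec) : l2 x -> norm2 x <= 1 -> Series (fun k => Cmod (x k) ^ 2) <= 1.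
Proof.
  intros Hx Hn. unfold norm2 in Hn. pose proof (Series_nonneg _ Hx (fun k => Cmod_sq_nonneg (x k))).
  rewrite <- (sqrt_1) in Hn. apply sqrt_le_0 in Hn; lra.
Qed.

Lemma Series_vsub (x y : vec) : l2 x -> l2 y ->
  Series (fun k => Cmod (vsub x y k) ^ 2) <= 2 * Series (fun k => Cmod (x k) ^ 2) + 2 * Series (fun k => Cmod (y k) ^ 2).
Proof.
  intros Hx Hy. rewrite <- !Series_scal_l, <- Series_plus.
  - apply Series_le. intros k; split. apply Cmod_sq_nonneg. unfold vsub, vadd, vscal.
    eapply Rle_trans. apply Cmod_sq_add. rewrite Cmod_sq_mult, Cmod_R. replace (Rabs (-1)) with 1 by (unfold Rabs; destruct Rcase_abs; lra). lra.
    destruct Hx as [lx Hx], Hy as [ly Hy]. eexists.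
    apply (is_series_plus (fun k => 2 * Cmod (x k) ^ 2) (fun k => 2 * Cmod (y k) ^ 2)).
    apply (is_series_scal_l 2 _ _ Hx). apply (is_series_scal_l 2 _ _ Hy).
  - destruct Hx as [lx Hx]. eexists. apply (is_series_scal_l 2 _ _ Hx).
  - destruct Hy as [ly Hy]. eexists. apply (is_series_scal_l 2 _ _ Hy).
Qed.

Lemma mbound_nonneg m B : mbound m B -> 0 <= B.
Proof. intros H. pose proof (H 0%nat 0%nat). pose proof (Cmod_ge_0 (m 0%nat 0%nat)). lra. Qed.

Lemma compact_crit m B : mbound m B ->
  (forall eps, 0 < eps -> exists N, forall k j, (N <= k)%nat -> Cmod (m k j) <= eps) ->
  compact_op (blkop m).
Proof.
  intros HB Hsm. split. apply (blkop_bounded m B HB).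
  intros u Hu. pose proof (mbound_nonneg m B HB) as HB0.
  destruct (diag_extract u 1) as [phi [Hphi Hcau]].
  { intros i k. destruct (Hu i). eapply Rle_trans. apply coord_le_norm; auto. auto. }
  exists phi. split. apply Hphi. intros eps Heps.
  set (e1 := eps / 6). destruct (Hsm e1 ltac:(unfold e1; lra)) as [N HN].
  set (eta := eps / (4 * (INR N + 1) * (B + 1))).
  assert (Heta : 0 < eta).
  { unfold eta. apply Rdiv_lt_0_compat. lra. pose proof (pos_INR N). apply Rmult_lt_0_compat; lra. }
  destruct (finite_cauchy (fun n => u (phi n)) Hcau (2 * N + 2)%nat eta Heta) as [I HI].
  exists I. intros a b Ha Hb.
  set (ua := u (phi a)). set (ub := u (phi b)).
  destruct (Hu (phi a)) as [Hla Hna]. destruct (Hu (phi b)) as [Hlb Hnb]. fold ua in Hla, Hna. fold ub in Hlb, Hnb.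
  set (w := vsub ua ub).
  assert (Hw : l2 w) by (unfold w, vsub; apply l2_vadd; auto; apply l2_vscal; auto).
  rewrite (blkop_l2 m ua Hla), (blkop_l2 m ub Hlb), <- blockform_lin. fold (vsub ua ub). fold w.
  assert (Hwk : forall k, (k < 2 * N + 2)%nat -> Cmod (w k) <= eta) by (intros k Hk; apply HI; auto).
  destruct (block_bound_gen w (blockform m w) (fun j => if (j <? 2 * N)%nat then 4 * B ^ 2 * eta ^ 2 else 0)
     (INR (2 * N) * (4 * B ^ 2 * eta ^ 2)) (2 * e1 ^ 2) Hw) as [_ Hser].
  - nra.
  - intros k. destruct (k <? 2 * N)%nat. pose proof (pow2_ge_0 B). pose proof (pow2_ge_0 eta). nra. lra.
  - apply is_series_const_fin.
  - intros j. pose proof (Cmod_sq_nonneg (w (2 * (j / 2))%nat)). pose proof (Cmod_sq_nonneg (w (2 * (j / 2) + 1)%nat)).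
    destruct (Nat.ltb_spec j (2 * N)).
    + eapply Rle_trans. apply (Cmod_lin2_sq _ _ _ _ B); apply HB.
      assert (Cmod (w (2 * (j / 2))%nat) ^ 2 <= eta ^ 2).
      { apply pow_incr. split. apply Cmod_ge_0. apply Hwk. pose proof (div2_cases j). lia. }
      assert (Cmod (w (2 * (j / 2) + 1)%nat) ^ 2 <= eta ^ 2).
      { apply pow_incr. split. apply Cmod_ge_0. apply Hwk. pose proof (div2_cases j). lia. }
      pose proof (pow2_ge_0 B). pose proof (pow2_ge_0 e1). nra.
    + rewrite Rplus_0_l. apply Cmod_lin2_sq; apply HN; pose proof (div2_cases j); lia.
  - assert (Hsw : Series (fun k => Cmod (w k) ^ 2) <= 4).
    { unfold w. eapply Rle_trans. apply Series_vsub; auto.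
      pose proof (Series_sq_le1 ua Hla Hna). pose proof (Series_sq_le1 ub Hlb Hnb). lra. }
    unfold norm2. rewrite <- (sqrt_pow2 eps) by lra. apply sqrt_le_1_alt.
    eapply Rle_trans. apply Hser.
    assert (E1 : 2 * (2 * e1 ^ 2) * Series (fun k => Cmod (w k) ^ 2) <= eps ^ 2 / 2).
    { pose proof (Series_nonneg _ Hw (fun k => Cmod_sq_nonneg (w k))). unfold e1.
      apply Rle_trans with (2 * (2 * (eps / 6) ^ 2) * 4). apply Rmult_le_compat_l; auto. nra. nra. }
    assert (E2 : INR (2 * N) * (4 * B ^ 2 * eta ^ 2) <= eps ^ 2 / 2).
    { rewrite mult_INR. simpl INR. unfold eta. pose proof (pos_INR N) as HN0.
      set (n := INR N) in *.
      assert (Hd : 0 < 4 * (n + 1) * (B + 1)) by (apply Rmult_lt_0_compat; lra).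
      replace ((1 + 1) * n * (4 * B ^ 2 * (eps / (4 * (n + 1) * (B + 1))) ^ 2))
        with (eps ^ 2 * ((n * B ^ 2) / (2 * (n + 1) ^ 2 * (B + 1) ^ 2))) by (field; lra).
      assert (n * B ^ 2 / (2 * (n + 1) ^ 2 * (B + 1) ^ 2) <= 1 / 2).
      { apply Rmult_le_reg_r with (2 * (n + 1) ^ 2 * (B + 1) ^ 2). nra.
        unfold Rdiv. rewrite Rmult_assoc, Rinv_l by nra. 
        assert (n <= (n+1)^2) by nra. assert (B^2 <= (B+1)^2) by nra.
        assert (n * B^2 <= (n+1)^2 * (B+1)^2). { apply Rmult_le_compat; nra. } nra. }
      pose proof (pow2_ge_0 eps). nra. }
    lra.
Qed.

Definition bil (m : nat -> nat -> C) (n : nat) (u0 u1 v0 v1 : C) : C :=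
  Cplus (Cplus (Cmult (Cmult u0 v0) (m (2 * n)%nat (2 * n)%nat)) (Cmult (Cmult u0 v1) (m (2 * n)%nat (2 * n + 1)%nat)))
        (Cplus (Cmult (Cmult u1 v0) (m (2 * n + 1)%nat (2 * n)%nat)) (Cmult (Cmult u1 v1) (m (2 * n + 1)%nat (2 * n + 1)%nat))).

Definition off1 m alpha n := bil m n (RtoC alpha) (RtoC (sa alpha)) (RtoC (sa alpha)) (RtoC (- alpha)).
Definition off2 m alpha n := bil m n (RtoC (sa alpha)) (RtoC (- alpha)) (RtoC alpha) (RtoC (sa alpha)).
Definition pe m alpha n := bil m n (RtoC alpha) (RtoC (sa alpha)) (RtoC alpha) (RtoC (sa alpha)).
Definition po m alpha n := bil m n (RtoC (sa alpha)) (RtoC (- alpha)) (RtoC (sa alpha)) (RtoC (- alpha)).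

Lemma f_even_eq alpha n : f_even alpha n = vadd (vscal (RtoC alpha) (e (2 * n))) (vscal (RtoC (sa alpha)) (e (2 * n + 1))).
Proof.
  apply vec_ext; intros j. unfold f_even, vadd, vscal, e, sa.
  destruct (Nat.eqb_spec j (2 * n)), (Nat.eqb_spec j (2 * n + 1)); try lia; ring.
Qed.

Lemma f_odd_eq alpha n : f_odd alpha n = vadd (vscal (RtoC (sa alpha)) (e (2 * n))) (vscal (RtoC (- alpha)) (e (2 * n + 1))).
Proof.
  apply vec_ext; intros j. unfold f_odd, vadd, vscal, e, sa.
  destruct (Nat.eqb_spec j (2 * n)), (Nat.eqb_spec j (2 * n + 1)); try lia; ring.
Qed.

Lemma inner_T_gen (T : op) (HT : bounded_op T) n (u0 u1 : C) (v : vec) (v0 v1 : C) :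
  (forall k, k <> (2 * n)%nat -> k <> (2 * n + 1)%nat -> v k = RtoC 0) ->
  v (2 * n)%nat = Cconj v0 -> v (2 * n + 1)%nat = Cconj v1 ->
  inner (T (vadd (vscal u0 (e (2 * n))) (vscal u1 (e (2 * n + 1))))) v = bil (ent T) n u0 u1 v0 v1.
Proof.
  intros Hv H0 H1.
  rewrite (bo_add T HT (vscal u0 (e (2 * n))) (vscal u1 (e (2 * n + 1)))) by auto using l2_e, l2_vscal.
  rewrite (bo_scal T HT (e (2 * n)) u0), (bo_scal T HT (e (2 * n + 1)) u1) by apply l2_e.
  rewrite (inner_two _ _ (2 * n) (2 * n + 1)); [ | lia | ].
  - rewrite H0, H1, !Cconj_conj. unfold vadd, vscal, bil, ent. ring.
  - intros k Hk1 Hk2. rewrite (Hv k Hk1 Hk2). apply C_ext; simpl; ring.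
Qed.

Lemma inner_off1 (T : op) (HT : bounded_op T) alpha n :
  inner (T (f_even alpha n)) (f_odd alpha n) = off1 (ent T) alpha n.
Proof.
  rewrite f_even_eq. apply inner_T_gen; auto.
  - intros k H1 H2. unfold f_odd. apply Nat.eqb_neq in H1, H2. rewrite H1, H2. reflexivity.
  - unfold f_odd. rewrite Nat.eqb_refl, Cconj_R. reflexivity.
  - unfold f_odd. rewrite Nat.eqb_refl. replace (Nat.eqb (2 * n + 1) (2 * n)) with false by (symmetry; apply Nat.eqb_neq; lia).
    rewrite Cconj_R. reflexivity.
Qed.

Lemma inner_off2 (T : op) (HT : bounded_op T) alpha n :
  inner (T (f_odd alpha n)) (f_even alpha n) = off2 (ent T) alpha n.
Proof.
  rewrite f_odd_eq. apply inner_T_gen; auto.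
  - intros k H1 H2. unfold f_even. apply Nat.eqb_neq in H1, H2. rewrite H1, H2. reflexivity.
  - unfold f_even. rewrite Nat.eqb_refl, Cconj_R. reflexivity.
  - unfold f_even. rewrite Nat.eqb_refl. replace (Nat.eqb (2 * n + 1) (2 * n)) with false by (symmetry; apply Nat.eqb_neq; lia).
    rewrite Cconj_R. unfold sa. reflexivity.
Qed.

Lemma sa_sq alpha : alpha ^ 2 <= 1 -> sa alpha ^ 2 = 1 - alpha ^ 2.
Proof. intros H. unfold sa. rewrite pow2_sqrt; lra. Qed.

Lemma sa_bound alpha : alpha ^ 2 <= 1 -> Rabs (sa alpha) <= 1 /\ Rabs alpha <= 1.
Proof.
  intros H. pose proof (sa_sq alpha H). assert (0 <= sa alpha) by (unfold sa; apply sqrt_pos).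
  split. rewrite Rabs_pos_eq by auto. nra.
  apply Rabs_le. nra.
Qed.

Lemma bil_bound m n u0 u1 v0 v1 eps :
  Cmod u0 <= 1 -> Cmod u1 <= 1 -> Cmod v0 <= 1 -> Cmod v1 <= 1 ->
  (forall a b, Cmod (m (2 * n + a)%nat (2 * n + b)%nat) <= eps) ->
  Cmod (bil m n u0 u1 v0 v1) <= 4 * eps.
Proof.
  intros H0 H1 H2 H3 Hm. unfold bil.
  assert (G : forall u v w, Cmod u <= 1 -> Cmod v <= 1 -> Cmod w <= eps -> Cmod (Cmult (Cmult u v) w) <= eps).
  { intros u v w Hu Hv Hw. rewrite !Cmod_mult.
    pose proof (Cmod_ge_0 u). pose proof (Cmod_ge_0 v). pose proof (Cmod_ge_0 w).
    apply Rle_trans with (1 * 1 * Cmod w). apply Rmult_le_compat_r; auto. apply Rmult_le_compat; auto. lra. }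
  pose proof (Hm 0%nat 0%nat) as K1. pose proof (Hm 0%nat 1%nat) as K2. pose proof (Hm 1%nat 0%nat) as K3. pose proof (Hm 1%nat 1%nat) as K4.
  rewrite !Nat.add_0_r in K1, K2, K3.
  pose proof (G _ _ _ H0 H2 K1). pose proof (G _ _ _ H0 H3 K2). pose proof (G _ _ _ H1 H2 K3). pose proof (G _ _ _ H1 H3 K4).
  eapply Rle_trans. apply Cmod_triangle.
  pose proof (Cmod_triangle (Cmult (Cmult u0 v0) (m (2 * n)%nat (2 * n)%nat)) (Cmult (Cmult u0 v1) (m (2 * n)%nat (2 * n + 1)%nat))).
  pose proof (Cmod_triangle (Cmult (Cmult u1 v0) (m (2 * n + 1)%nat (2 * n)%nat)) (Cmult (Cmult u1 v1) (m (2 * n + 1)%nat (2 * n + 1)%nat))).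
  lra.
Qed.

Lemma Cmod_RtoC_le1 r : Rabs r <= 1 -> Cmod (RtoC r) <= 1.
Proof. intros; rewrite Cmod_R; auto. Qed.

Lemma coef_bounds alpha : alpha ^ 2 <= 1 ->
  Cmod (RtoC alpha) <= 1 /\ Cmod (RtoC (sa alpha)) <= 1 /\ Cmod (RtoC (- alpha)) <= 1.
Proof.
  intros H. destruct (sa_bound alpha H). rewrite !Cmod_R, Rabs_Ropp. auto.
Qed.

Lemma off_linear_add m1 m2 alpha n :
  off1 (fun k j => Cplus (m1 k j) (m2 k j)) alpha n = Cplus (off1 m1 alpha n) (off1 m2 alpha n) /\ off2 (fun k j => Cplus (m1 k j) (m2 k j)) alpha n = Cplus (off2 m1 alpha n) (off2 m2 alpha n).
Proof. unfold off1, off2, bil. split; ring. Qed.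

Definition offsmall (X : nat -> Prop) (alpha : R) (m : nat -> nat -> C) : Prop :=
  forall eps, 0 < eps -> exists N, forall n, (N <= n)%nat -> X n ->
    Cmod (off1 m alpha n) <= eps /\ Cmod (off2 m alpha n) <= eps.

Lemma RtoC_opp' r : RtoC (- r) = Copp (RtoC r).
Proof. apply C_ext; simpl; ring. Qed.

Lemma t_one alpha : alpha ^ 2 <= 1 -> Cplus (Cmult (RtoC alpha) (RtoC alpha)) (Cmult (RtoC (sa alpha)) (RtoC (sa alpha))) = RtoC 1.
Proof. intros H. pose proof (sa_sq alpha H). apply C_ext; simpl; nra. Qed.

Lemma even_2n n : Nat.even (2 * n) = true.
Proof. rewrite Nat.even_mul. reflexivity. Qed.
Lemma even_2n1 n : Nat.even (2 * n + 1) = false.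
Proof. rewrite Nat.even_add, even_2n. reflexivity. Qed.

Definition fE alpha k : C := if Nat.even k then RtoC alpha else RtoC (sa alpha).
Definition fO alpha k : C := if Nat.even k then RtoC (sa alpha) else RtoC (- alpha).

Lemma fE_bound alpha k : alpha ^ 2 <= 1 -> Cmod (fE alpha k) <= 1.
Proof. intros H. destruct (coef_bounds alpha H) as (?&?&?). unfold fE. destruct (Nat.even k); auto. Qed.
Lemma fO_bound alpha k : alpha ^ 2 <= 1 -> Cmod (fO alpha k) <= 1.
Proof. intros H. destruct (coef_bounds alpha H) as (?&?&?). unfold fO. destruct (Nat.even k); auto. Qed.

Lemma same_block_cases k j : (k / 2)%nat = (j / 2)%nat ->
  (k = 2 * (j / 2) \/ k = 2 * (j / 2) + 1)%nat /\ (j = 2 * (j / 2) \/ j = 2 * (j / 2) + 1)%nat.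
Proof. intros H. pose proof (div2_cases k). pose proof (div2_cases j). lia. Qed.

Lemma basis_id (M : nat -> nat -> C) alpha n k j : alpha ^ 2 <= 1 ->
  (k = 2 * n \/ k = 2 * n + 1)%nat -> (j = 2 * n \/ j = 2 * n + 1)%nat ->
  M k j = Cplus (Cplus (Cmult (pe M alpha n) (Cmult (fE alpha k) (fE alpha j)))
                       (Cmult (off1 M alpha n) (Cmult (fE alpha k) (fO alpha j))))
                (Cplus (Cmult (off2 M alpha n) (Cmult (fO alpha k) (fE alpha j)))
                       (Cmult (po M alpha n) (Cmult (fO alpha k) (fO alpha j)))).
Proof.
  intros Ha Hk Hj. pose proof (t_one alpha Ha) as Ht.
  set (ca := RtoC alpha) in *. set (cs := RtoC (sa alpha)) in *.
  unfold pe, po, off1, off2, bil, fE, fO. rewrite RtoC_opp'. fold ca cs.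
  destruct Hk as [-> | ->], Hj as [-> | ->]; rewrite ?even_2n, ?even_2n1;
  match goal with |- ?L = ?R => transitivity (Cmult (Cmult (Cplus (Cmult ca ca) (Cmult cs cs)) (Cplus (Cmult ca ca) (Cmult cs cs))) L);
    [rewrite Ht; ring | ring] end.
Qed.

Lemma Cmod_mult3_le (a b c : C) (A : R) : Cmod a <= A -> Cmod b <= 1 -> Cmod c <= 1 -> Cmod (Cmult a (Cmult b c)) <= A.
Proof.
  intros Ha Hb Hc. rewrite !Cmod_mult. pose proof (Cmod_ge_0 a). pose proof (Cmod_ge_0 b). pose proof (Cmod_ge_0 c).
  apply Rle_trans with (Cmod a * (1 * 1)). apply Rmult_le_compat_l; auto. apply Rmult_le_compat; auto. lra.
Qed.

Lemma bil_bound_coef m n alpha B : alpha ^ 2 <= 1 -> mbound m B ->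
  Cmod (pe m alpha n) <= 4 * B /\ Cmod (po m alpha n) <= 4 * B /\ Cmod (off1 m alpha n) <= 4 * B /\ Cmod (off2 m alpha n) <= 4 * B.
Proof.
  intros Ha Hm. destruct (coef_bounds alpha Ha) as (H1 & H2 & H3).
  unfold pe, po, off1, off2. repeat split; apply bil_bound; auto.
Qed.

Lemma ent_opadd T U k j : ent (opadd T U) k j = Cplus (ent T k j) (ent U k j).
Proof. reflexivity. Qed.
Lemma ent_opscal c T k j : ent (opscal c T) k j = Cmult c (ent T k j).
Proof. reflexivity. Qed.

Lemma block_zero_ent T n : block_zero T n <-> forall k j, (k / 2 = n)%nat -> (j / 2 = n)%nat -> ent T k j = RtoC 0.
Proof.
  unfold block_zero. split.
  - intros H k j Hk Hj. rewrite <- inner_e_r. apply H; apply in_block_div; auto.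
  - intros H k j Hk Hj. rewrite inner_e_r. apply H; apply in_block_div; auto.
Qed.

Lemma DK_offsmall X alpha T : alpha ^ 2 <= 1 -> DKset X alpha T -> offsmall X alpha (ent T).
Proof.
  intros Ha (S & Rk & HS & HRc & HRa & ET) eps Heps.
  destruct (compact_ent_small Rk (proj1 HRa) HRc (eps / 4) ltac:(lra)) as [N HN].
  exists N. intros n Hn HX. subst T.
  destruct HS as [HSa HSd]. destruct (HSd n HX) as [D1 D2].
  rewrite inner_off1 in D1 by apply HSa. rewrite inner_off2 in D2 by apply HSa.
  destruct (off_linear_add (ent S) (ent Rk) alpha n) as [E1 E2].
  change (ent (opadd S Rk)) with (fun k j => Cplus (ent S k j) (ent Rk k j)).
  rewrite E1, E2, D1, D2, !Cplus_0_l.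
  destruct (coef_bounds alpha Ha) as (H1 & H2 & H3).
  assert (Hm : forall a b, Cmod (ent Rk (2 * n + a)%nat (2 * n + b)%nat) <= eps / 4) by (intros; apply HN; lia).
  unfold off1, off2. split; (eapply Rle_trans; [apply bil_bound; eauto|lra]).
Qed.

Lemma bil_blkop m n u0 u1 v0 v1 : bil (ent (blkop m)) n u0 u1 v0 v1 = bil m n u0 u1 v0 v1.
Proof. unfold bil. rewrite !ent_blkop, !div_2n, !div_2n1, Nat.eqb_refl. reflexivity. Qed.

Lemma xind_true X n : X n -> xind X n = RtoC 1.
Proof. intros H. unfold xind. destruct (excluded_middle_informative (X n)); tauto. Qed.
Lemma xind_false X n : ~ X n -> xind X n = RtoC 0.
Proof. intros H. unfold xind. destruct (excluded_middle_informative (X n)); tauto. Qed.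
Lemma xind_bound X n : Cmod (xind X n) <= 1.
Proof. unfold xind. destruct (excluded_middle_informative (X n)); rewrite ?Cmod_1, ?Cmod_0; lra. Qed.

Definition diagm X alpha (m : nat -> nat -> C) (k j : nat) : C :=
  Cmult (xind X (j / 2)%nat) (Cplus (Cmult (pe m alpha (j / 2)%nat) (Cmult (fE alpha k) (fE alpha j)))
                                   (Cmult (po m alpha (j / 2)%nat) (Cmult (fO alpha k) (fO alpha j)))).

Lemma diagm_bound X alpha m B : alpha ^ 2 <= 1 -> mbound m B -> mbound (diagm X alpha m) (8 * B).
Proof.
  intros Ha HB k j. unfold diagm. rewrite Cmod_mult.
  apply Rle_trans with (1 * (4 * B + 4 * B)); [|lra].
  apply Rmult_le_compat. apply Cmod_ge_0. apply Cmod_ge_0. apply xind_bound.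
  eapply Rle_trans. apply Cmod_triangle.
  destruct (bil_bound_coef m (j / 2)%nat alpha B Ha HB) as (H1 & H2 & _).
  apply Rplus_le_compat; apply Cmod_mult3_le; auto using fE_bound, fO_bound.
Qed.

Lemma diagm_off X alpha m n : X n ->
  off1 (diagm X alpha m) alpha n = RtoC 0 /\ off2 (diagm X alpha m) alpha n = RtoC 0.
Proof.
  intros HX. unfold off1, off2, bil, diagm, fE, fO.
  rewrite !div_2n, !div_2n1, !even_2n, !even_2n1, (xind_true X n HX), !RtoC_opp'.
  split; ring.
Qed.

Lemma offsmall_DK X alpha T : alpha ^ 2 <= 1 -> A0_on X T -> offsmall X alpha (ent T) -> DKset X alpha T.
Proof.
  intros Ha [HA HZ] Hsm.
  destruct (A0_mbound T HA) as [B HB]. pose proof (mbound_nonneg _ _ HB) as HB0.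
  set (sm := diagm X alpha (ent T)).
  pose proof (diagm_bound X alpha (ent T) B Ha HB) as Hsb. fold sm in Hsb.
  set (rm := fun k j => if (k / 2 =? j / 2)%nat then Cplus (ent T k j) (Cmult (RtoC (-1)) (sm k j)) else RtoC 0).
  assert (Hrb : mbound rm (B + 8 * B)).
  { intros k j. unfold rm. destruct (k / 2 =? j / 2)%nat.
    - eapply Rle_trans. apply Cmod_triangle. rewrite Cmod_mult, Cmod_R. replace (Rabs (-1)) with 1 by (unfold Rabs; destruct Rcase_abs; lra). rewrite Rmult_1_l.
      apply Rplus_le_compat; auto.
    - rewrite Cmod_0. lra. }
  assert (Hsz : forall n k j, ~ X n -> (j / 2)%nat = n -> sm k j = RtoC 0).
  { intros n k j Hn Hj. unfold sm, diagm. rewrite Hj, (xind_false X n Hn). ring. }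
  exists (blkop sm), (blkop rm). split; [|split; [|split]].
  - split. split. apply (blkop_A0 sm (8 * B) Hsb).
    + intros n Hn. apply block_zero_ent. intros k j Hk Hj. rewrite ent_blkop.
      rewrite Hk, Hj, Nat.eqb_refl. apply (Hsz n); auto.
    + intros n HX. rewrite inner_off1, inner_off2 by apply (blkop_bounded sm (8 * B) Hsb).
      unfold off1, off2. rewrite !bil_blkop. apply diagm_off; auto.
  - apply (compact_crit rm (B + 8 * B) Hrb). intros eps Heps.
    destruct (Hsm (eps / 2) ltac:(lra)) as [N0 HN0]. exists (2 * N0 + 2)%nat. intros k j Hk.
    unfold rm. destruct (Nat.eqb_spec (k / 2) (j / 2)) as [E|E]; [|rewrite Cmod_0; lra].
    set (n := (j / 2)%nat) in *.
    assert (Hn : (N0 <= n)%nat) by (pose proof (div2_cases k); lia).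
    destruct (classic (X n)) as [HX|HX].
    + destruct (HN0 n Hn HX) as [K1 K2].
      destruct (same_block_cases k j E) as [Hk' Hj']. fold n in Hk', Hj'.
      rewrite (basis_id (ent T) alpha n k j Ha Hk' Hj').
      unfold sm, diagm. fold n. rewrite (xind_true X n HX).
      match goal with |- Cmod ?z <= _ => replace z with
        (Cplus (Cmult (off1 (ent T) alpha n) (Cmult (fE alpha k) (fO alpha j)))
               (Cmult (off2 (ent T) alpha n) (Cmult (fO alpha k) (fE alpha j)))) by ring end.
      eapply Rle_trans. apply Cmod_triangle.
      assert (Cmod (Cmult (off1 (ent T) alpha n) (Cmult (fE alpha k) (fO alpha j))) <= eps / 2)
        by (apply Cmod_mult3_le; auto using fE_bound, fO_bound).
      assert (Cmod (Cmult (off2 (ent T) alpha n) (Cmult (fO alpha k) (fE alpha j))) <= eps / 2)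
        by (apply Cmod_mult3_le; auto using fE_bound, fO_bound).
      lra.
    + rewrite (Hsz n k j HX eq_refl).
      rewrite (proj1 (block_zero_ent T n) (HZ n HX) k j) by auto.
      replace (Cplus (RtoC 0) (Cmult (RtoC (-1)) (RtoC 0))) with (RtoC 0) by ring. rewrite Cmod_0. lra.
  - split. apply (blkop_A0 rm _ Hrb).
    intros n Hn. apply block_zero_ent. intros k j Hk Hj. rewrite ent_blkop.
    rewrite Hk, Hj, Nat.eqb_refl. unfold rm. rewrite Hk, Hj, Nat.eqb_refl.
    rewrite (Hsz n k j Hn Hj). rewrite (proj1 (block_zero_ent T n) (HZ n Hn) k j) by auto. ring.
  - rewrite opadd_blk. rewrite (A0_blk T HA) at 1. apply blkop_ext. intros k j E.
    unfold rm. rewrite (proj2 (Nat.eqb_eq _ _) E). ring.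
Qed.

Lemma block_induct (P : nat -> nat -> Prop) :
  (forall n, P (2 * n)%nat (2 * n)%nat) -> (forall n, P (2 * n)%nat (2 * n + 1)%nat) ->
  (forall n, P (2 * n + 1)%nat (2 * n)%nat) -> (forall n, P (2 * n + 1)%nat (2 * n + 1)%nat) ->
  forall k j, (k / 2 = j / 2)%nat -> P k j.
Proof.
  intros H1 H2 H3 H4 k j E. destruct (same_block_cases k j E) as [Hk Hj].
  generalize dependent (j / 2)%nat. intros n _ Hk Hj.
  destruct Hk as [-> | ->], Hj as [-> | ->]; auto.
Qed.

Lemma neq_2n n : (2 * n + 1 =? 2 * n)%nat = false.
Proof. apply Nat.eqb_neq; lia. Qed.
Lemma neq_2n' n : (2 * n =? 2 * n + 1)%nat = false.
Proof. apply Nat.eqb_neq; lia. Qed.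

Definition cmpr X (m : nat -> nat -> C) := mprod (pam X) (mprod m (pam X)).

Lemma cmpr_block X m k j : (k / 2 = j / 2)%nat ->
  cmpr X m k j = Cmult (xind X (j / 2)%nat) (Cmult (m k j) (xind X (j / 2)%nat)).
Proof.
  revert k j. apply block_induct; intros n; unfold cmpr, mprod, pam;
  rewrite ?div_2n, ?div_2n1, ?Nat.eqb_refl, ?neq_2n, ?neq_2n'; ring.
Qed.

Lemma compress_blk X T : A0 T -> exists B, mbound (cmpr X (ent T)) B /\
  opcomp (PA X) (opcomp T (PA X)) = blkop (cmpr X (ent T)).
Proof.
  intros HA. destruct (A0_mbound T HA) as [B HB].
  pose proof (mbound_prod _ _ _ _ HB (mbound_pam X)) as H1.
  pose proof (mbound_prod _ _ _ _ (mbound_pam X) H1) as H2.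
  eexists. split. exact H2.
  rewrite (A0_blk T HA) at 1. rewrite PA_blk.
  rewrite (opcomp_blk (ent T) (pam X) 1 (mbound_pam X)).
  rewrite (opcomp_blk (pam X) _ _ H1). reflexivity.
Qed.

Definition Mchar (XX : (nat -> Prop) -> Prop) (alph : (nat -> Prop) -> R) (T : op) : Prop :=
  A0 T /\ forall X, XX X -> offsmall X (alph X) (ent T).

Lemma off_cmpr X alpha m n : X n ->
  off1 (ent (blkop (cmpr X m))) alpha n = off1 m alpha n /\ off2 (ent (blkop (cmpr X m))) alpha n = off2 m alpha n.
Proof.
  intros HX. unfold off1, off2. rewrite !bil_blkop. unfold bil.
  rewrite !cmpr_block by (rewrite ?div_2n, ?div_2n1; reflexivity).
  rewrite !div_2n, !div_2n1, (xind_true X n HX). split; ring.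
Qed.

Lemma Mset_Mchar XX alph T : (forall X, XX X -> alph X ^ 2 <= 1) -> (Mset XX alph T <-> Mchar XX alph T).
Proof.
  intros Hal. unfold Mset, Mchar. split; intros [HA H]; split; auto; intros X HX.
  - specialize (H X HX). destruct (compress_blk X T HA) as (B & HB & E). rewrite E in H.
    apply DK_offsmall in H; auto.
    intros eps Heps. destruct (H eps Heps) as [N HN]. exists N. intros n Hn HXn.
    destruct (off_cmpr X (alph X) (ent T) n HXn) as [E1 E2]. rewrite <- E1, <- E2. auto.
  - destruct (compress_blk X T HA) as (B & HB & E). rewrite E.
    apply offsmall_DK; auto.
    + split. apply (blkop_A0 _ _ HB). intros n Hn. apply block_zero_ent. intros k j Hk Hj.
      rewrite ent_blkop, Hk, Hj, Nat.eqb_refl, cmpr_block by congruence.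
      rewrite Hj, (xind_false X n Hn). ring.
    + intros eps Heps. destruct (H X HX eps Heps) as [N HN]. exists N. intros n Hn HXn.
      destruct (off_cmpr X (alph X) (ent T) n HXn) as [E1 E2]. rewrite E1, E2. auto.
Qed.

Lemma A0_opadd T U : A0 T -> A0 U -> A0 (opadd T U).
Proof.
  intros HT HU. destruct (A0_mbound T HT) as [B1 H1]. destruct (A0_mbound U HU) as [B2 H2].
  rewrite (A0_blk T HT), (A0_blk U HU), opadd_blk. apply (blkop_A0 _ _ (mbound_add _ _ _ _ H1 H2)).
Qed.

Lemma A0_opscal c T : A0 T -> A0 (opscal c T).
Proof.
  intros HT. destruct (A0_mbound T HT) as [B1 H1].
  rewrite (A0_blk T HT), opscal_blk. apply (blkop_A0 _ _ (mbound_scal c _ _ H1)).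
Qed.

Lemma A0_opcomp T U : A0 T -> A0 U -> A0 (opcomp T U) /\
  forall k j, (k / 2 = j / 2)%nat -> ent (opcomp T U) k j = mprod (ent T) (ent U) k j.
Proof.
  intros HT HU. destruct (A0_mbound T HT) as [B1 H1]. destruct (A0_mbound U HU) as [B2 H2].
  rewrite (A0_blk T HT), (A0_blk U HU), (opcomp_blk _ _ _ H2). split.
  - apply (blkop_A0 _ _ (mbound_prod _ _ _ _ H1 H2)).
  - intros k j E. rewrite ent_blkop, (proj2 (Nat.eqb_eq _ _) E).
    unfold mprod. rewrite !ent_blkop, !div_2n, !div_2n1.
    rewrite ?(proj2 (Nat.eqb_eq (k / 2) (j / 2)) E), ?Nat.eqb_refl. reflexivity.
Qed.

Lemma off_scal c m alpha n :
  off1 (fun k j => Cmult c (m k j)) alpha n = Cmult c (off1 m alpha n) /\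
  off2 (fun k j => Cmult c (m k j)) alpha n = Cmult c (off2 m alpha n).
Proof. unfold off1, off2, bil. split; ring. Qed.

Lemma off_prod mT mU alpha n : alpha ^ 2 <= 1 ->
  off1 (mprod mT mU) alpha n = Cplus (Cmult (pe mU alpha n) (off1 mT alpha n)) (Cmult (off1 mU alpha n) (po mT alpha n)) /\
  off2 (mprod mT mU) alpha n = Cplus (Cmult (off2 mU alpha n) (pe mT alpha n)) (Cmult (po mU alpha n) (off2 mT alpha n)).
Proof.
  intros Ha. pose proof (t_one alpha Ha) as Ht.
  set (ca := RtoC alpha) in *. set (cs := RtoC (sa alpha)) in *.
  unfold off1, off2, pe, po, bil, mprod. rewrite !div_2n, !div_2n1, RtoC_opp'. fold ca cs.
  split; match goal with |- ?L = ?R => transitivity (Cmult (Cplus (Cmult ca ca) (Cmult cs cs)) L);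
    [rewrite Ht; ring | ring] end.
Qed.

Lemma off_adj m alpha n :
  off1 (fun k j => Cconj (m j k)) alpha n = Cconj (off2 m alpha n) /\
  off2 (fun k j => Cconj (m j k)) alpha n = Cconj (off1 m alpha n).
Proof.
  unfold off1, off2, bil. rewrite !Cplus_conj, !Cmult_conj, !Cconj_R. split; ring.
Qed.

Section Alg.
Variable XX : (nat -> Prop) -> Prop.
Variable alph : (nat -> Prop) -> R.
Hypothesis Hal : forall X, XX X -> alph X ^ 2 <= 1.

Lemma Mchar_add T U : Mchar XX alph T -> Mchar XX alph U -> Mchar XX alph (opadd T U).
Proof.
  intros [HT ST] [HU SU]. split. apply A0_opadd; auto.
  intros X HX eps Heps. destruct (ST X HX (eps / 2) ltac:(lra)) as [N1 H1]. destruct (SU X HX (eps / 2) ltac:(lra)) as [N2 H2].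
  exists (N1 + N2)%nat. intros n Hn HXn.
  destruct (off_linear_add (ent T) (ent U) (alph X) n) as [E1 E2].
  change (ent (opadd T U)) with (fun k j => Cplus (ent T k j) (ent U k j)). rewrite E1, E2.
  destruct (H1 n ltac:(lia) HXn). destruct (H2 n ltac:(lia) HXn).
  split; (eapply Rle_trans; [apply Cmod_triangle|lra]).
Qed.

Lemma Mchar_scal c T : Mchar XX alph T -> Mchar XX alph (opscal c T).
Proof.
  intros [HT ST]. split. apply A0_opscal; auto.
  intros X HX eps Heps. pose proof (Cmod_ge_0 c).
  destruct (ST X HX (eps / (Cmod c + 1))) as [N1 H1]. apply Rdiv_lt_0_compat; lra.
  exists N1. intros n Hn HXn.
  destruct (off_scal c (ent T) (alph X) n) as [E1 E2].
  change (ent (opscal c T)) with (fun k j => Cmult c (ent T k j)). rewrite E1, E2, !Cmod_mult.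
  destruct (H1 n Hn HXn) as [K1 K2].
  assert (G : forall z, Cmod z <= eps / (Cmod c + 1) -> Cmod c * Cmod z <= eps).
  { intros z Hz. apply Rle_trans with ((Cmod c + 1) * (eps / (Cmod c + 1))).
    apply Rmult_le_compat; try lra; apply Cmod_ge_0. right; field; lra. }
  split; apply G; auto.
Qed.

Lemma Mchar_comp T U : Mchar XX alph T -> Mchar XX alph U -> Mchar XX alph (opcomp T U).
Proof.
  intros [HT ST] [HU SU]. destruct (A0_opcomp T U HT HU) as [HC EC]. split; auto.
  destruct (A0_mbound T HT) as [B1 HB1]. destruct (A0_mbound U HU) as [B2 HB2].
  pose proof (mbound_nonneg _ _ HB1). pose proof (mbound_nonneg _ _ HB2).
  intros X HX eps Heps. set (d := eps / (8 * (B1 + B2 + 1))).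
  assert (Hd : 0 < d) by (unfold d; apply Rdiv_lt_0_compat; lra).
  destruct (ST X HX d Hd) as [N1 H1]. destruct (SU X HX d Hd) as [N2 H2].
  exists (N1 + N2)%nat. intros n Hn HXn.
  assert (E : forall a, off1 (ent (opcomp T U)) a n = off1 (mprod (ent T) (ent U)) a n /\
                        off2 (ent (opcomp T U)) a n = off2 (mprod (ent T) (ent U)) a n).
  { intros a. unfold off1, off2, bil. rewrite !EC by (rewrite ?div_2n, ?div_2n1; reflexivity). split; reflexivity. }
  destruct (E (alph X)) as [E1 E2]. rewrite E1, E2.
  destruct (off_prod (ent T) (ent U) (alph X) n (Hal X HX)) as [F1 F2]. rewrite F1, F2.
  destruct (bil_bound_coef (ent T) n (alph X) B1 (Hal X HX) HB1) as (P1 & Q1 & _).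
  destruct (bil_bound_coef (ent U) n (alph X) B2 (Hal X HX) HB2) as (P2 & Q2 & _).
  destruct (H1 n ltac:(lia) HXn) as [K1 K2]. destruct (H2 n ltac:(lia) HXn) as [K3 K4].
  assert (Pm : forall a b P Q, Cmod a <= P -> Cmod b <= Q -> Cmod (Cmult a b) <= P * Q).
  { intros a b P Q Ha Hb. rewrite Cmod_mult. pose proof (Cmod_ge_0 a). pose proof (Cmod_ge_0 b).
    apply Rmult_le_compat; auto. }
  assert (Fin : 4 * B2 * d + d * (4 * B1) <= eps /\ d * (4 * B1) + 4 * B2 * d <= eps).
  { unfold d. split; apply Rle_trans with (eps * (4 * (B1 + B2)) / (8 * (B1 + B2 + 1))); try (right; field; lra);
    apply Rmult_le_reg_r with (8 * (B1 + B2 + 1)); try lra; unfold Rdiv; rewrite Rmult_assoc, Rinv_l by lra; nra. }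
  split; (eapply Rle_trans; [apply Cmod_triangle|]).
  - pose proof (Pm _ _ _ _ P2 K1). pose proof (Pm _ _ _ _ K3 Q1). lra.
  - pose proof (Pm _ _ _ _ K4 P1). pose proof (Pm _ _ _ _ Q2 K2). lra.
Qed.

Lemma adj_ent T T' : bounded_op T -> bounded_op T' -> is_adjoint T T' -> forall k j, ent T' k j = Cconj (ent T j k).
Proof.
  intros HT HT' Had k j. specialize (Had (e j) (e k) (l2_e j) (l2_e k)).
  rewrite inner_e_r, inner_e_l in Had. unfold ent. rewrite Had, Cconj_conj. reflexivity.
Qed.

Lemma Mchar_adj T T' : Mchar XX alph T -> bounded_op T' -> is_adjoint T T' -> Mchar XX alph T'.
Proof.
  intros [HT ST] HT' Had. pose proof (adj_ent T T' (proj1 HT) HT' Had) as E.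
  split.
  - split; auto. intros k j H. rewrite inner_e_r in H. change (ent T' k j <> RtoC 0) in H.
    rewrite E in H. destruct (proj2 HT j k) as (n & H1 & H2).
    { rewrite inner_e_r. intros H0. apply H. change (ent T j k = RtoC 0) in H0. rewrite H0. apply C_ext; simpl; ring. }
    exists n; auto.
  - intros X HX eps Heps. destruct (ST X HX eps Heps) as [N HN]. exists N. intros n Hn HXn.
    replace (ent T') with (fun k j => Cconj (ent T j k)) by (apply functional_extensionality; intros k;
      apply functional_extensionality; intros j; symmetry; apply E).
    destruct (off_adj (ent T) (alph X) n) as [E1 E2]. rewrite E1, E2, !Cmod_conj.
    destruct (HN n Hn HXn). auto.
Qed.

Lemma ent_diff_bound T U eps : bounded_op T -> bounded_op U ->
  (forall x, l2 x -> norm2 (vadd (T x) (vscal (RtoC (-1)) (U x))) <= eps * norm2 x) ->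
  forall k j, Cmod (Cplus (ent T k j) (Cmult (RtoC (-1)) (ent U k j))) <= eps.
Proof.
  intros HT HU H k j. specialize (H (e k) (l2_e k)). rewrite norm2_e, Rmult_1_r in H.
  eapply Rle_trans. 2: exact H.
  apply (coord_le_norm (vadd (T (e k)) (vscal (RtoC (-1)) (U (e k)))) j).
  apply l2_vadd. apply HT, l2_e. apply l2_vscal, HU, l2_e.
Qed.

Lemma Mchar_closed T : bounded_op T ->
  (forall eps, 0 < eps -> exists U, Mchar XX alph U /\
     forall x, l2 x -> norm2 (vadd (T x) (vscal (RtoC (-1)) (U x))) <= eps * norm2 x) ->
  Mchar XX alph T.
Proof.
  intros HT H.
  assert (HA : A0 T).
  { split; auto. intros k j Hne. rewrite inner_e_r in Hne. change (ent T k j <> RtoC 0) in Hne.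
    destruct (Nat.eq_dec (k / 2) (j / 2)) as [E|E].
    - exists (j / 2)%nat. split; apply in_block_div; auto.
    - exfalso. apply Hne. apply Cmod_small_zero. intros eps Heps.
      destruct (H eps Heps) as (U & [HU _] & HTU).
      pose proof (ent_diff_bound T U eps HT (proj1 HU) HTU k j) as G.
      rewrite (A0_ent U HU k j E) in G. replace (Cplus (ent T k j) (Cmult (RtoC (-1)) (RtoC 0))) with (ent T k j) in G by ring.
      auto. }
  split; auto. intros X HX eps Heps.
  destruct (H (eps / 16) ltac:(lra)) as (U & [HU SU] & HTU).
  destruct (SU X HX (eps / 2) ltac:(lra)) as [N HN]. exists N. intros n Hn HXn.
  pose proof (ent_diff_bound T U _ HT (proj1 HU) HTU) as G.
  set (dm := fun k j => Cplus (ent T k j) (Cmult (RtoC (-1)) (ent U k j))).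
  assert (ET : ent T = fun k j => Cplus (ent U k j) (dm k j)).
  { apply functional_extensionality; intros k; apply functional_extensionality; intros j. unfold dm. ring. }
  rewrite ET. destruct (off_linear_add (ent U) dm (alph X) n) as [E1 E2]. rewrite E1, E2.
  destruct (coef_bounds _ (Hal X HX)) as (C1 & C2 & C3).
  assert (Hdm : forall a b, Cmod (dm (2 * n + a)%nat (2 * n + b)%nat) <= eps / 16) by (intros; apply G).
  assert (D1 : Cmod (off1 dm (alph X) n) <= 4 * (eps / 16)) by (unfold off1; apply bil_bound; auto).
  assert (D2 : Cmod (off2 dm (alph X) n) <= 4 * (eps / 16)) by (unfold off2; apply bil_bound; auto).
  destruct (HN n Hn HXn) as [K1 K2].
  split; (eapply Rle_trans; [apply Cmod_triangle|lra]).
Qed.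

Lemma Mchar_cstar : cstar_subalg (Mchar XX alph).
Proof.
  split; [|split; [|split; [|split; [|split]]]].
  - intros T [HA _]. apply HA.
  - apply Mchar_add.
  - apply Mchar_scal.
  - apply Mchar_comp.
  - intros T T' H1 H2 H3. apply (Mchar_adj T T'); auto.
  - apply Mchar_closed.
Qed.

End Alg.

Lemma Cmod_mult_conj_le (u v : C) : Cmod (Cmult u (Cconj v)) <= (Cmod u ^ 2 + Cmod v ^ 2) / 2.
Proof.
  rewrite Cmod_mult, Cmod_conj. pose proof (pow2_ge_0 (Cmod u - Cmod v)). nra.
Qed.

Lemma ex_series_inner (u v : vec) : l2 u -> l2 v ->
  ex_series (fun k => Re (Cmult (u k) (Cconj (v k)))) /\ ex_series (fun k => Im (Cmult (u k) (Cconj (v k)))).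
Proof.
  intros [lu Hu] [lv Hv].
  assert (Hs : ex_series (fun k => (Cmod (u k) ^ 2 + Cmod (v k) ^ 2) / 2)).
  { eexists. eapply is_series_ext. 2: apply (is_series_scal_l (/ 2) _ _ (is_series_plus _ _ _ _ Hu Hv)).
    intros k. change (scal (/ 2) (plus (Cmod (u k) ^ 2) (Cmod (v k) ^ 2))) with (/ 2 * (Cmod (u k) ^ 2 + Cmod (v k) ^ 2)).
    unfold Rdiv. apply Rmult_comm. }
  split; apply (ex_series_le_R _ (fun k => (Cmod (u k) ^ 2 + Cmod (v k) ^ 2) / 2)); auto; intros k;
    (eapply Rle_trans; [|apply Cmod_mult_conj_le]).
  apply re_le_Cmod. apply im_le_Cmod'.
Qed.

Lemma Series_pairs_eq (f : nat -> R) : ex_series f -> Series f = Series (pairs f).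
Proof.
  intros [l Hl]. rewrite (is_series_unique _ _ Hl). symmetry. apply is_series_unique, is_series_pairs, Hl.
Qed.

Definition herm (q : nat -> nat -> C) : Prop := forall k j, (k / 2 = j / 2)%nat -> q k j = Cconj (q j k).

Lemma blkop_selfadj q B : mbound q B -> herm q -> is_adjoint (blkop q) (blkop q).
Proof.
  intros HB Hh x y Hx Hy. rewrite !blkop_l2 by auto.
  pose proof (proj1 (blockform_bound q B x HB Hx)) as Hqx.
  pose proof (proj1 (blockform_bound q B y HB Hy)) as Hqy.
  destruct (ex_series_inner _ _ Hqx Hy) as [A1 A2]. destruct (ex_series_inner _ _ Hx Hqy) as [B1 B2].
  assert (Key : forall n, Cplus (Cmult (blockform q x (2 * n)%nat) (Cconj (y (2 * n)%nat)))
                                (Cmult (blockform q x (2 * n + 1)%nat) (Cconj (y (2 * n + 1)%nat)))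
                        = Cplus (Cmult (x (2 * n)%nat) (Cconj (blockform q y (2 * n)%nat)))
                                (Cmult (x (2 * n + 1)%nat) (Cconj (blockform q y (2 * n + 1)%nat)))).
  { intros n. unfold blockform. rewrite !div_2n, !div_2n1.
    rewrite !Cplus_conj, !Cmult_conj.
    rewrite <- (Hh (2 * n)%nat (2 * n)%nat) by reflexivity.
    rewrite <- (Hh (2 * n)%nat (2 * n + 1)%nat) by (rewrite div_2n, div_2n1; reflexivity).
    rewrite <- (Hh (2 * n + 1)%nat (2 * n)%nat) by (rewrite div_2n, div_2n1; reflexivity).
    rewrite <- (Hh (2 * n + 1)%nat (2 * n + 1)%nat) by reflexivity.
    ring. }
  unfold inner. apply C_ext; cbn [fst snd].
  - rewrite (Series_pairs_eq _ A1), (Series_pairs_eq _ B1). apply Series_ext. intros n. unfold pairs.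
    specialize (Key n). apply (f_equal fst) in Key. simpl in Key |- *. lra.
  - rewrite (Series_pairs_eq _ A2), (Series_pairs_eq _ B2). apply Series_ext. intros n. unfold pairs.
    specialize (Key n). apply (f_equal snd) in Key. simpl in Key |- *. lra.
Qed.

Lemma blkop_proj q B : mbound q B -> herm q ->
  (forall k j, (k / 2 = j / 2)%nat -> mprod q q k j = q k j) -> is_projection (blkop q).
Proof.
  intros HB Hh Hi. split. apply (blkop_bounded q B HB). split.
  - rewrite (opcomp_blk q q B HB). apply blkop_ext. auto.
  - apply (blkop_selfadj q B HB Hh).
Qed.

Definition rr (a d b1 b2 : R) := sqrt (((a - d) / 2) ^ 2 + b1 ^ 2 + b2 ^ 2).
Definition mu2 a d b1 b2 := (a + d) / 2 - rr a d b1 b2.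
Definition gg2 a d b1 b2 := 2 * rr a d b1 b2.

Lemma rr_sq a d b1 b2 : rr a d b1 b2 * rr a d b1 b2 = ((a - d) / 2) ^ 2 + b1 ^ 2 + b2 ^ 2.
Proof. unfold rr. apply sqrt_sqrt. pose proof (pow2_ge_0 ((a - d) / 2)). pose proof (pow2_ge_0 b1). pose proof (pow2_ge_0 b2). lra. Qed.

Lemma rr_nonneg a d b1 b2 : 0 <= rr a d b1 b2.
Proof. apply sqrt_pos. Qed.

Lemma rr_ge a d b1 b2 : Rabs ((a - d) / 2) <= rr a d b1 b2 /\ Rabs b1 <= rr a d b1 b2 /\ Rabs b2 <= rr a d b1 b2.
Proof.
  pose proof (rr_sq a d b1 b2). pose proof (rr_nonneg a d b1 b2).
  set (r := rr a d b1 b2) in *. set (p := (a - d) / 2) in *.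
  pose proof (pow2_ge_0 p). pose proof (pow2_ge_0 b1). pose proof (pow2_ge_0 b2).
  repeat split; apply Rabs_le; split; nra.
Qed.

Lemma rr_le a d b1 b2 : rr a d b1 b2 <= Rabs ((a - d) / 2) + Rabs b1 + Rabs b2.
Proof.
  pose proof (rr_sq a d b1 b2). pose proof (rr_nonneg a d b1 b2).
  pose proof (Rabs_pos ((a - d) / 2)). pose proof (Rabs_pos b1). pose proof (Rabs_pos b2).
  set (r := rr a d b1 b2) in *. set (p := (a - d) / 2) in *.
  assert (p ^ 2 = Rabs p * Rabs p) by (rewrite <- Rabs_mult; rewrite Rabs_pos_eq; nra).
  assert (b1 ^ 2 = Rabs b1 * Rabs b1) by (rewrite <- Rabs_mult; rewrite Rabs_pos_eq; nra).
  assert (b2 ^ 2 = Rabs b2 * Rabs b2) by (rewrite <- Rabs_mult; rewrite Rabs_pos_eq; nra).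
  apply Rsqr_incr_0_var; unfold Rsqr; nra.
Qed.

Section P2.
Variables a d b1 b2 : R.
Hypothesis Hg : 0 < gg2 a d b1 b2.

Definition E00 : C := ((a - mu2 a d b1 b2) / gg2 a d b1 b2, 0).
Definition E01 : C := (b1 / gg2 a d b1 b2, b2 / gg2 a d b1 b2).
Definition E10 : C := (b1 / gg2 a d b1 b2, - b2 / gg2 a d b1 b2).
Definition E11 : C := ((d - mu2 a d b1 b2) / gg2 a d b1 b2, 0).

Lemma K00 : (a - mu2 a d b1 b2) ^ 2 + b1 ^ 2 + b2 ^ 2 = gg2 a d b1 b2 * (a - mu2 a d b1 b2).
Proof. pose proof (rr_sq a d b1 b2). unfold mu2, gg2. nra. Qed.
Lemma K11 : (d - mu2 a d b1 b2) ^ 2 + b1 ^ 2 + b2 ^ 2 = gg2 a d b1 b2 * (d - mu2 a d b1 b2).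
Proof. pose proof (rr_sq a d b1 b2). unfold mu2, gg2. nra. Qed.
Lemma K01 : (a - mu2 a d b1 b2) + (d - mu2 a d b1 b2) = gg2 a d b1 b2.
Proof. unfold mu2, gg2. lra. Qed.

Ltac gsimpl := set (g := gg2 a d b1 b2) in *; set (m := mu2 a d b1 b2) in *.

Lemma P2_00 : Cplus (Cmult E00 E00) (Cmult E01 E10) = E00.
Proof.
  pose proof K00. unfold E00, E01, E10. gsimpl. apply C_ext; simpl.
  - replace ((a - m) / g * ((a - m) / g) - 0 * 0 + (b1 / g * (b1 / g) - b2 / g * (- b2 / g)))
      with (((a - m) ^ 2 + b1 ^ 2 + b2 ^ 2) / (g * g)) by (field; lra).
    rewrite H. field. lra.
  - field. lra.
Qed.

Lemma P2_11 : Cplus (Cmult E10 E01) (Cmult E11 E11) = E11.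
Proof.
  pose proof K11. unfold E11, E01, E10. gsimpl. apply C_ext; simpl.
  - replace (b1 / g * (b1 / g) - - b2 / g * (b2 / g) + ((d - m) / g * ((d - m) / g) - 0 * 0))
      with (((d - m) ^ 2 + b1 ^ 2 + b2 ^ 2) / (g * g)) by (field; lra).
    rewrite H. field. lra.
  - field. lra.
Qed.

Lemma P2_01 : Cplus (Cmult E00 E01) (Cmult E01 E11) = E01.
Proof.
  pose proof K01. unfold E00, E11, E01. gsimpl. apply C_ext; simpl.
  - replace ((a - m) / g * (b1 / g) - 0 * (b2 / g) + (b1 / g * ((d - m) / g) - b2 / g * 0))
      with (b1 * ((a - m) + (d - m)) / (g * g)) by (field; lra). rewrite H. field. lra.
  - replace ((a - m) / g * (b2 / g) + 0 * (b1 / g) + (b1 / g * 0 + b2 / g * ((d - m) / g)))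
      with (b2 * ((a - m) + (d - m)) / (g * g)) by (field; lra). rewrite H. field. lra.
Qed.

Lemma P2_10 : Cplus (Cmult E10 E00) (Cmult E11 E10) = E10.
Proof.
  pose proof K01. unfold E00, E11, E10. gsimpl. apply C_ext; simpl.
  - replace (b1 / g * ((a - m) / g) - - b2 / g * 0 + ((d - m) / g * (b1 / g) - 0 * (- b2 / g)))
      with (b1 * ((a - m) + (d - m)) / (g * g)) by (field; lra). rewrite H. field. lra.
  - replace (b1 / g * 0 + - b2 / g * ((a - m) / g) + ((d - m) / g * (- b2 / g) + 0 * (b1 / g)))
      with (- b2 * ((a - m) + (d - m)) / (g * g)) by (field; lra). rewrite H. field. lra.
Qed.

Lemma E_bounds : Cmod E00 <= 1 /\ Cmod E01 <= 1 /\ Cmod E10 <= 1 /\ Cmod E11 <= 1.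
Proof.
  destruct (rr_ge a d b1 b2) as (H1 & H2 & H3).
  unfold E00, E01, E10, E11, mu2. unfold gg2 in *. set (r := rr a d b1 b2) in *.
  assert (G : forall x, Rabs x <= 2 * r -> Rabs (x / (2 * r)) <= 1).
  { intros x Hx. unfold Rdiv. rewrite Rabs_mult, Rabs_inv, (Rabs_pos_eq (2 * r)) by lra.
    apply Rmult_le_reg_r with (2 * r). lra. rewrite Rmult_assoc, Rinv_l by lra. lra. }
  assert (G2 : forall x, Rabs x <= r -> Rabs (x / (2 * r)) <= 1 / 2).
  { intros x Hx. unfold Rdiv. rewrite Rabs_mult, Rabs_inv, (Rabs_pos_eq (2 * r)) by lra.
    apply Rmult_le_reg_r with (2 * r). lra. rewrite Rmult_assoc, Rinv_l by lra. lra. }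
  assert (C1 : forall x, Rabs x <= 1 -> Cmod (x, 0) <= 1).
  { intros x Hx. change (Cmod (RtoC x) <= 1). rewrite Cmod_R. auto. }
  assert (C2 : forall x y, Rabs x <= 1 / 2 -> Rabs y <= 1 / 2 -> Cmod (x, y) <= 1).
  { intros x y Hx Hy. eapply Rle_trans. apply Cmod_le_re_im. simpl. lra. }
  repeat split.
  - apply C1, G. replace (a - ((a + d) / 2 - r)) with ((a - d) / 2 + r) by field.
    eapply Rle_trans. apply Rabs_triang. rewrite (Rabs_pos_eq r) by lra. lra.
  - apply C2; apply G2; auto.
  - apply C2; apply G2; auto. rewrite Rabs_Ropp. auto.
  - apply C1, G. replace (d - ((a + d) / 2 - r)) with (- ((a - d) / 2) + r) by field.
    eapply Rle_trans. apply Rabs_triang. rewrite (Rabs_pos_eq r) by lra. rewrite Rabs_Ropp. lra.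
Qed.
End P2.

Definition dlt (k j : nat) : C := if (k =? j)%nat then RtoC 1 else RtoC 0.

Definition hA (h : nat -> nat -> C) n := fst (h (2 * n)%nat (2 * n)%nat).
Definition hD (h : nat -> nat -> C) n := fst (h (2 * n + 1)%nat (2 * n + 1)%nat).
Definition hB1 (h : nat -> nat -> C) n := fst (h (2 * n)%nat (2 * n + 1)%nat).
Definition hB2 (h : nat -> nat -> C) n := snd (h (2 * n)%nat (2 * n + 1)%nat).
Definition mu h n := mu2 (hA h n) (hD h n) (hB1 h n) (hB2 h n).
Definition gg h n := gg2 (hA h n) (hD h n) (hB1 h n) (hB2 h n).

Definition Em (dl : R) (h : nat -> nat -> C) (k j : nat) : C :=
  if (k / 2 =? j / 2)%nat then
    (if Rle_dec dl (gg h (j / 2)%nat) then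
       Cmult (Cplus (h k j) (Copp (Cmult (RtoC (mu h (j / 2)%nat)) (dlt k j)))) (RtoC (/ gg h (j / 2)%nat))
     else RtoC 0)
  else RtoC 0.

Lemma herm_entries h n : herm h ->
  h (2 * n)%nat (2 * n)%nat = (hA h n, 0) /\ h (2 * n + 1)%nat (2 * n + 1)%nat = (hD h n, 0) /\
  h (2 * n)%nat (2 * n + 1)%nat = (hB1 h n, hB2 h n) /\ h (2 * n + 1)%nat (2 * n)%nat = (hB1 h n, - hB2 h n).
Proof.
  intros Hh. unfold hA, hD, hB1, hB2.
  pose proof (Hh (2 * n)%nat (2 * n)%nat eq_refl) as H1.
  pose proof (Hh (2 * n + 1)%nat (2 * n + 1)%nat eq_refl) as H2.
  pose proof (Hh (2 * n + 1)%nat (2 * n)%nat ltac:(rewrite div_2n, div_2n1; reflexivity)) as H3.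
  destruct (h (2 * n)%nat (2 * n)%nat) as [x1 y1]. destruct (h (2 * n + 1)%nat (2 * n + 1)%nat) as [x2 y2].
  destruct (h (2 * n)%nat (2 * n + 1)%nat) as [x3 y3]. destruct (h (2 * n + 1)%nat (2 * n)%nat) as [x4 y4].
  unfold Cconj in *; simpl in *. inversion H1. inversion H2. inversion H3.
  repeat split; f_equal; lra.
Qed.

Lemma Em_entries dl h n : herm h -> dl <= gg h n -> 0 < gg h n ->
  Em dl h (2 * n)%nat (2 * n)%nat = E00 (hA h n) (hD h n) (hB1 h n) (hB2 h n) /\
  Em dl h (2 * n)%nat (2 * n + 1)%nat = E01 (hA h n) (hD h n) (hB1 h n) (hB2 h n) /\
  Em dl h (2 * n + 1)%nat (2 * n)%nat = E10 (hA h n) (hD h n) (hB1 h n) (hB2 h n) /\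
  Em dl h (2 * n + 1)%nat (2 * n + 1)%nat = E11 (hA h n) (hD h n) (hB1 h n) (hB2 h n).
Proof.
  intros Hh Hd Hg. destruct (herm_entries h n Hh) as (H1 & H2 & H3 & H4).
  unfold Em, dlt. rewrite !div_2n, !div_2n1, !Nat.eqb_refl, !neq_2n, !neq_2n'.
  destruct (Rle_dec dl (gg h n)); [|lra].
  rewrite H1, H2, H3, H4. unfold E00, E01, E10, E11. fold (mu h n) (gg h n).
  unfold gg in *. unfold mu.
  repeat split; apply C_ext; simpl; field; lra.
Qed.

Lemma Em_zero dl h n k j : gg h n < dl -> (j / 2)%nat = n -> Em dl h k j = RtoC 0.
Proof.
  intros H Hj. unfold Em. rewrite Hj. destruct (k / 2 =? n)%nat; auto.
  destruct (Rle_dec dl (gg h n)); auto. lra.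
Qed.

Lemma Em_idem dl h : 0 < dl -> herm h -> forall k j, (k / 2 = j / 2)%nat -> mprod (Em dl h) (Em dl h) k j = Em dl h k j.
Proof.
  intros Hdl Hh. apply block_induct; intros n; unfold mprod; rewrite ?div_2n, ?div_2n1;
  (destruct (Rle_dec dl (gg h n)) as [Hle|Hlt];
   [ destruct (Em_entries dl h n Hh Hle ltac:(lra)) as (Q1&Q2&Q3&Q4); rewrite ?Q1, ?Q2, ?Q3, ?Q4;
     assert (Hg : 0 < gg2 (hA h n) (hD h n) (hB1 h n) (hB2 h n)) by (unfold gg in Hle; lra)
   | rewrite !(Em_zero dl h n) by (rewrite ?div_2n, ?div_2n1; auto; lra); apply C_ext; simpl; ring ]).
  - rewrite <- (P2_00 _ _ _ _ Hg) at 3. ring.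
  - rewrite <- (P2_01 _ _ _ _ Hg) at 3. ring.
  - rewrite <- (P2_10 _ _ _ _ Hg) at 3. ring.
  - rewrite <- (P2_11 _ _ _ _ Hg) at 3. ring.
Qed.

Lemma dlt_sym k j : dlt k j = dlt j k.
Proof. unfold dlt. rewrite Nat.eqb_sym. reflexivity. Qed.
Lemma dlt_conj k j : Cconj (dlt k j) = dlt k j.
Proof. unfold dlt. destruct (k =? j)%nat; apply Cconj_R. Qed.

Lemma Em_herm dl h : herm h -> herm (Em dl h).
Proof.
  intros Hh k j E. unfold Em. rewrite E, Nat.eqb_refl.
  destruct (Rle_dec dl (gg h (j / 2)%nat)); [|apply C_ext; simpl; ring].
  rewrite Cmult_conj, Cplus_conj, Copp_conj, Cmult_conj, !Cconj_R, dlt_conj, dlt_sym.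
  rewrite <- (Hh k j E). reflexivity.
Qed.

Lemma Em_bound dl h : 0 < dl -> herm h -> mbound (Em dl h) 1.
Proof.
  intros Hdl Hh k j. destruct (Nat.eqb_spec (k / 2) (j / 2)) as [E|E].
  - revert k j E. apply block_induct; intros n; rewrite ?div_2n, ?div_2n1;
    (destruct (Rle_dec dl (gg h n)) as [Hle|Hlt];
     [ destruct (Em_entries dl h n Hh Hle ltac:(lra)) as (Q1&Q2&Q3&Q4);
       assert (Hg : 0 < gg2 (hA h n) (hD h n) (hB1 h n) (hB2 h n)) by (unfold gg in Hle; lra);
       destruct (E_bounds _ _ _ _ Hg) as (F1&F2&F3&F4)
     | rewrite (Em_zero dl h n) by (rewrite ?div_2n, ?div_2n1; auto; lra); rewrite Cmod_0; lra ]).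
    + rewrite Q1; auto. + rewrite Q2; auto. + rewrite Q3; auto. + rewrite Q4; auto.
  - unfold Em. destruct (Nat.eqb_spec (k / 2) (j / 2)); try tauto. rewrite Cmod_0; lra.
Qed.

Lemma Em_recon dl h k j : 0 < dl -> herm h -> (k / 2 = j / 2)%nat -> dl <= gg h (j / 2)%nat ->
  h k j = Cplus (Cmult (RtoC (mu h (j / 2)%nat)) (dlt k j)) (Cmult (RtoC (gg h (j / 2)%nat)) (Em dl h k j)).
Proof.
  intros Hdl Hh E Hle. unfold Em. rewrite E, Nat.eqb_refl.
  destruct (Rle_dec dl (gg h (j / 2)%nat)); [|lra].
  set (g := gg h (j / 2)%nat) in *.
  assert (Hg : RtoC g <> RtoC 0) by (intros H; apply RtoC_inj in H; lra).
  replace (RtoC (/ g)) with (Cinv (RtoC g)).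
  - field. auto.
  - apply C_ext; simpl; field; lra.
Qed.

Lemma h_minus_mu h k j : herm h -> (k / 2 = j / 2)%nat ->
  Cmod (Cplus (h k j) (Copp (Cmult (RtoC (mu h (j / 2)%nat)) (dlt k j)))) <= gg h (j / 2)%nat.
Proof.
  intros Hh. revert k j. apply block_induct; intros n; rewrite ?div_2n, ?div_2n1;
  destruct (herm_entries h n Hh) as (H1&H2&H3&H4); unfold dlt; rewrite ?Nat.eqb_refl, ?neq_2n, ?neq_2n';
  unfold mu, gg, mu2, gg2; destruct (rr_ge (hA h n) (hD h n) (hB1 h n) (hB2 h n)) as (R1&R2&R3);
  pose proof (rr_nonneg (hA h n) (hD h n) (hB1 h n) (hB2 h n)); set (r := rr (hA h n) (hD h n) (hB1 h n) (hB2 h n)) in *.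
  - rewrite H1. replace (Cplus (hA h n, 0) (Copp (Cmult (RtoC ((hA h n + hD h n) / 2 - r)) (RtoC 1))))
      with (RtoC ((hA h n - hD h n) / 2 + r)) by (apply C_ext; simpl; field).
    rewrite Cmod_R. eapply Rle_trans. apply Rabs_triang. rewrite (Rabs_pos_eq r); lra.
  - rewrite H3. replace (Cplus (hB1 h n, hB2 h n) (Copp (Cmult (RtoC ((hA h n + hD h n) / 2 - r)) (RtoC 0))))
      with ((hB1 h n, hB2 h n) : C) by (apply C_ext; simpl; ring).
    eapply Rle_trans. apply Cmod_le_re_im. simpl. lra.
  - rewrite H4. replace (Cplus (hB1 h n, - hB2 h n) (Copp (Cmult (RtoC ((hA h n + hD h n) / 2 - r)) (RtoC 0))))
      with ((hB1 h n, - hB2 h n) : C) by (apply C_ext; simpl; ring).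
    eapply Rle_trans. apply Cmod_le_re_im. simpl. rewrite Rabs_Ropp. lra.
  - rewrite H2. replace (Cplus (hD h n, 0) (Copp (Cmult (RtoC ((hA h n + hD h n) / 2 - r)) (RtoC 1))))
      with (RtoC (- ((hA h n - hD h n) / 2) + r)) by (apply C_ext; simpl; field).
    rewrite Cmod_R. eapply Rle_trans. apply Rabs_triang. rewrite Rabs_Ropp, (Rabs_pos_eq r); lra.
Qed.

Lemma off_dlt alpha n : off1 dlt alpha n = RtoC 0 /\ off2 dlt alpha n = RtoC 0.
Proof.
  unfold off1, off2, bil, dlt. rewrite !Nat.eqb_refl, !neq_2n, !neq_2n', RtoC_opp'. split; ring.
Qed.

Lemma off_Em dl h alpha n : 0 < dl ->
  Cmod (off1 (Em dl h) alpha n) <= Cmod (off1 h alpha n) / dl /\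
  Cmod (off2 (Em dl h) alpha n) <= Cmod (off2 h alpha n) / dl.
Proof.
  intros Hdl. unfold off1, off2, bil, Em. rewrite !div_2n, !div_2n1, !Nat.eqb_refl.
  destruct (Rle_dec dl (gg h n)) as [Hle|Hlt].
  - unfold dlt. rewrite !Nat.eqb_refl, !neq_2n, !neq_2n'. set (g := gg h n) in *. set (m := mu h n).
    match goal with |- Cmod ?A <= _ /\ Cmod ?B <= _ =>
      replace A with (Cmult (off1 h alpha n) (RtoC (/ g)));
      [replace B with (Cmult (off2 h alpha n) (RtoC (/ g)))|] end.
    + rewrite !Cmod_mult, !Cmod_R, Rabs_pos_eq. 2: apply Rlt_le, Rinv_0_lt_compat; lra.
      split; (apply Rmult_le_compat_l; [apply Cmod_ge_0|]; apply Rinv_le_contravar; lra).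
    + unfold off2, bil. rewrite RtoC_opp'. ring.
    + unfold off1, bil. rewrite RtoC_opp'. ring.
  - replace (Cplus (Cplus (Cmult (Cmult (RtoC alpha) (RtoC (sa alpha))) (RtoC 0)) (Cmult (Cmult (RtoC alpha) (RtoC (- alpha))) (RtoC 0)))
      (Cplus (Cmult (Cmult (RtoC (sa alpha)) (RtoC (sa alpha))) (RtoC 0)) (Cmult (Cmult (RtoC (sa alpha)) (RtoC (- alpha))) (RtoC 0)))) with (RtoC 0) by ring.
    replace (Cplus (Cplus (Cmult (Cmult (RtoC (sa alpha)) (RtoC alpha)) (RtoC 0)) (Cmult (Cmult (RtoC (sa alpha)) (RtoC (sa alpha))) (RtoC 0)))
      (Cplus (Cmult (Cmult (RtoC (- alpha)) (RtoC alpha)) (RtoC 0)) (Cmult (Cmult (RtoC (- alpha)) (RtoC (sa alpha))) (RtoC 0)))) with (RtoC 0) by ring.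
    rewrite Cmod_0. pose proof (Cmod_ge_0 (off1 h alpha n)). pose proof (Cmod_ge_0 (off2 h alpha n)).
    split; apply Rmult_le_pos; auto; apply Rlt_le, Rinv_0_lt_compat; lra.
Qed.

Lemma mu_gg_bound h BH n : mbound h BH ->
  Rabs (mu h n) <= 4 * BH /\ 0 <= gg h n <= 6 * BH.
Proof.
  intros HB. unfold mu, gg, mu2, gg2, hA, hD, hB1, hB2.
  pose proof (Rle_trans _ _ _ (re_le_Cmod _) (HB (2 * n)%nat (2 * n)%nat)) as A1.
  pose proof (Rle_trans _ _ _ (re_le_Cmod _) (HB (2 * n + 1)%nat (2 * n + 1)%nat)) as A2.
  pose proof (Rle_trans _ _ _ (re_le_Cmod _) (HB (2 * n)%nat (2 * n + 1)%nat)) as A3.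
  pose proof (Rle_trans _ _ _ (im_le_Cmod' _) (HB (2 * n)%nat (2 * n + 1)%nat)) as A4.
  unfold Re in *.
  set (a := fst (h (2 * n)%nat (2 * n)%nat)) in *. set (d := fst (h (2 * n + 1)%nat (2 * n + 1)%nat)) in *.
  set (b1 := fst (h (2 * n)%nat (2 * n + 1)%nat)) in *. set (b2 := snd (h (2 * n)%nat (2 * n + 1)%nat)) in *.
  pose proof (rr_le a d b1 b2). pose proof (rr_nonneg a d b1 b2).
  assert (Rabs ((a - d) / 2) <= BH).
  { unfold Rdiv. rewrite Rabs_mult, Rabs_inv, (Rabs_pos_eq 2) by lra.
    pose proof (Rabs_triang a (- d)). rewrite Rabs_Ropp in H1. 
    apply Rmult_le_reg_r with 2. lra. rewrite Rmult_assoc, Rinv_l by lra. unfold Rminus. lra. }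
  assert (Rabs ((a + d) / 2) <= BH).
  { unfold Rdiv. rewrite Rabs_mult, Rabs_inv, (Rabs_pos_eq 2) by lra.
    pose proof (Rabs_triang a d).
    apply Rmult_le_reg_r with 2. lra. rewrite Rmult_assoc, Rinv_l by lra. lra. }
  split.
  - unfold Rminus. eapply Rle_trans. apply Rabs_triang. rewrite Rabs_Ropp, (Rabs_pos_eq (rr a d b1 b2)) by auto. lra.
  - split; lra.
Qed.

Definition idem (q : nat -> nat -> C) : Prop := forall k j, (k / 2 = j / 2)%nat -> mprod q q k j = q k j.

Definition cut (a : R) (f : nat -> R) (q : nat -> nat -> C) (k j : nat) : C :=
  if Rle_dec a (f (j / 2)%nat) then q k j else RtoC 0.

Lemma cut_mbound a f q B : 0 <= B -> mbound q B -> mbound (cut a f q) B.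
Proof. intros H0 H k j. unfold cut. destruct (Rle_dec a (f (j / 2)%nat)); auto. rewrite Cmod_0; auto. Qed.

Lemma cut_herm a f q : herm q -> herm (cut a f q).
Proof.
  intros H k j E. unfold cut. rewrite E. destruct (Rle_dec a (f (j / 2)%nat)); auto.
  apply C_ext; simpl; ring.
Qed.

Lemma cut_idem a f q : idem q -> idem (cut a f q).
Proof.
  intros H k j E. specialize (H k j E). unfold mprod, cut in *. rewrite div_2n, div_2n1.
  destruct (Rle_dec a (f (j / 2)%nat)); auto. ring.
Qed.

Lemma off_cut a f q alpha n :
  off1 (cut a f q) alpha n = (if Rle_dec a (f n) then off1 q alpha n else RtoC 0) /\
  off2 (cut a f q) alpha n = (if Rle_dec a (f n) then off2 q alpha n else RtoC 0).
Proof.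
  unfold off1, off2, bil, cut. rewrite !div_2n, !div_2n1. destruct (Rle_dec a (f n)); split; auto; ring.
Qed.

Section Mem.
Variable XX : (nat -> Prop) -> Prop.
Variable alph : (nat -> Prop) -> R.

Definition osq (q : nat -> nat -> C) := forall X, XX X -> offsmall X (alph X) q.

Lemma osq_cut a f q : osq q -> osq (cut a f q).
Proof.
  intros H X HX eps Heps. destruct (H X HX eps Heps) as [N HN]. exists N. intros n Hn HXn.
  destruct (off_cut a f q (alph X) n) as [E1 E2]. rewrite E1, E2.
  destruct (Rle_dec a (f n)). auto. rewrite Cmod_0. lra.
Qed.

Lemma pq_Mchar q B : mbound q B -> osq q -> Mchar XX alph (blkop q).
Proof.
  intros HB H. split. apply (blkop_A0 q B HB).
  intros X HX eps Heps. destruct (H X HX eps Heps) as [N HN]. exists N. intros n Hn HXn.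
  unfold off1, off2. rewrite !bil_blkop. apply HN; auto.
Qed.

Lemma osq_dlt : osq dlt.
Proof.
  intros X HX eps Heps. exists 0%nat. intros n _ _. destruct (off_dlt (alph X) n) as [E1 E2].
  rewrite E1, E2, Cmod_0. lra.
Qed.

Lemma osq_Em dl h : 0 < dl -> osq h -> osq (Em dl h).
Proof.
  intros Hdl H X HX eps Heps. destruct (H X HX (eps * dl) (Rmult_lt_0_compat _ _ Heps Hdl)) as [N HN]. exists N. intros n Hn HXn.
  destruct (off_Em dl h (alph X) n Hdl) as [E1 E2]. destruct (HN n Hn HXn) as [K1 K2].
  split; [eapply Rle_trans; [apply E1|] | eapply Rle_trans; [apply E2|]];
  apply Rmult_le_reg_r with dl; auto; unfold Rdiv; rewrite Rmult_assoc, Rinv_l by lra; lra.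
Qed.

Lemma osq_zero : osq (fun _ _ => RtoC 0).
Proof.
  intros X HX eps Heps. exists 0%nat. intros n _ _. unfold off1, off2.
  assert (E : forall u0 u1 v0 v1, bil (fun _ _ => RtoC 0) n u0 u1 v0 v1 = RtoC 0) by (intros; unfold bil; ring).
  rewrite !E, Cmod_0. split; lra.
Qed.
End Mem.

Lemma dlt_mbound : mbound dlt 1.
Proof. intros k j. unfold dlt. destruct (k =? j)%nat; rewrite ?Cmod_1, ?Cmod_0; lra. Qed.
Lemma dlt_herm : herm dlt.
Proof. intros k j _. rewrite dlt_sym, dlt_conj. reflexivity. Qed.
Lemma dlt_idem : idem dlt.
Proof.
  unfold idem. apply block_induct; intros n; unfold mprod, dlt; rewrite ?div_2n, ?div_2n1, ?Nat.eqb_refl, ?neq_2n, ?neq_2n'; ring.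
Qed.

Lemma zero_idem : idem (fun _ _ => RtoC 0).
Proof. intros k j _. unfold mprod. ring. Qed.
Lemma zero_herm : herm (fun _ _ => RtoC 0).
Proof. intros k j _. rewrite Cconj_R. reflexivity. Qed.
Lemma zero_mbound : mbound (fun _ _ => RtoC 0) 1.
Proof. intros k j. rewrite Cmod_0. lra. Qed.

Definition Zop : op := blkop (fun _ _ => RtoC 0).
Definition layer (dl : R) (f : nat -> R) (q : nat -> nat -> C) (l : nat) : op := blkop (cut (INR l * dl) f q).

Fixpoint LS (dl : R) (f : nat -> R) (q : nat -> nat -> C) (L : nat) : op :=
  match L with O => Zop | S L' => opadd (LS dl f q L') (opscal (RtoC dl) (layer dl f q (S L'))) end.

Fixpoint cnt (dl : R) (L : nat) (x : R) : R :=
  match L with O => 0 | S L' => cnt dl L' x + (if Rle_dec (INR (S L') * dl) x then 1 else 0) end.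

Lemma ent_LS dl f q L k j : (k / 2 = j / 2)%nat ->
  ent (LS dl f q L) k j = Cmult (RtoC (dl * cnt dl L (f (j / 2)%nat))) (q k j).
Proof.
  intros E. induction L; cbn [LS cnt].
  - unfold Zop. rewrite ent_blkop, (proj2 (Nat.eqb_eq _ _) E). apply C_ext; simpl; ring.
  - rewrite ent_opadd, ent_opscal, IHL. unfold layer. rewrite ent_blkop, (proj2 (Nat.eqb_eq _ _) E).
    unfold cut. destruct (Rle_dec (INR (S L) * dl) (f (j / 2)%nat)); apply C_ext; simpl; ring.
Qed.

Lemma cnt_props dl : 0 < dl -> forall L x, 0 <= x ->
  cnt dl L x <= INR L /\ (INR L * dl <= x -> cnt dl L x = INR L) /\ dl * cnt dl L x <= x /\
  (x < INR (S L) * dl -> x - dl * cnt dl L x < dl) /\ (x < dl -> cnt dl L x = 0).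
Proof.
  intros Hdl L x Hx. induction L as [|L IH]; cbn [cnt].
  - simpl INR. repeat split; intros; lra.
  - destruct IH as (I1 & I2 & I3 & I4 & I5).
    pose proof (pos_INR L).
    destruct (Rle_dec (INR (S L) * dl) x) as [Hle|Hlt].
    + rewrite !S_INR in *.
      assert (Ec : cnt dl L x = INR L) by (apply I2; nra).
      rewrite Ec. repeat split; intros; nra.
    + rewrite !S_INR in *. repeat split; intros; try lra.
Qed.

Lemma nat_large x : exists L : nat, x < INR L.
Proof.
  assert (Hp : 0 < / (Rabs x + 1)) by (apply Rinv_0_lt_compat; pose proof (Rabs_pos x); lra).
  destruct (archimed_cor1 _ Hp) as [N [HN1 HN2]]. exists N.
  destruct (Rlt_or_le x (INR N)) as [H|H]; auto. exfalso.
  assert (HNp : 0 < INR N) by (apply lt_0_INR; lia).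
  assert (INR N <= Rabs x + 1) by (pose proof (Rle_abs x); lra).
  assert (/ (Rabs x + 1) <= / INR N) by (apply Rinv_le_contravar; auto). lra.
Qed.

Definition hH (t : nat -> nat -> C) (k j : nat) : C := Cmult (RtoC (/ 2)) (Cplus (t k j) (Cmult (RtoC 1) (Cconj (t j k)))).
Definition hK (t : nat -> nat -> C) (k j : nat) : C := Cmult (0, - / 2) (Cplus (t k j) (Cmult (RtoC (-1)) (Cconj (t j k)))).

Lemma t_decomp t k j : t k j = Cplus (hH t k j) (Cmult Ci (hK t k j)).
Proof.
  unfold hH, hK. destruct (t k j) as [a b]. destruct (t j k) as [c d]. apply C_ext; simpl; field.
Qed.

Lemma hH_herm t : herm (hH t).
Proof.
  intros k j _. unfold hH. destruct (t k j) as [a b]. destruct (t j k) as [c d]. apply C_ext; simpl; field.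
Qed.
Lemma hK_herm t : herm (hK t).
Proof.
  intros k j _. unfold hK. destruct (t k j) as [a b]. destruct (t j k) as [c d]. apply C_ext; simpl; field.
Qed.

Lemma hmix_bound (c s : C) t B : Cmod c <= / 2 -> Cmod s <= 1 -> mbound t B ->
  mbound (fun k j => Cmult c (Cplus (t k j) (Cmult s (Cconj (t j k))))) B.
Proof.
  intros Hc Hs HB k j. rewrite Cmod_mult. pose proof (mbound_nonneg t B HB).
  apply Rle_trans with (/ 2 * (2 * B)); [|lra].
  apply Rmult_le_compat; try apply Cmod_ge_0; auto.
  eapply Rle_trans. apply Cmod_triangle. rewrite Cmod_mult, Cmod_conj.
  pose proof (HB k j). pose proof (HB j k). pose proof (Cmod_ge_0 s). pose proof (Cmod_ge_0 (t j k)).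
  assert (Cmod s * Cmod (t j k) <= 1 * B) by (apply Rmult_le_compat; auto). lra.
Qed.

Lemma Cmod_half1 : Cmod (RtoC (/ 2)) <= / 2.
Proof. rewrite Cmod_R, Rabs_pos_eq; lra. Qed.
Lemma Cmod_half2 : Cmod (0, - / 2) <= / 2.
Proof. eapply Rle_trans. apply Cmod_le_re_im. simpl. rewrite Rabs_R0, Rabs_Ropp, Rabs_pos_eq; lra. Qed.
Lemma Cmod_pm1 r : r = 1 \/ r = -1 -> Cmod (RtoC r) <= 1.
Proof. intros [-> | ->]; rewrite Cmod_R; unfold Rabs; destruct Rcase_abs; lra. Qed.

Lemma off_mix c s t alpha n :
  off1 (fun k j => Cmult c (Cplus (t k j) (Cmult s (Cconj (t j k))))) alpha n = Cmult c (Cplus (off1 t alpha n) (Cmult s (Cconj (off2 t alpha n)))) /\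
  off2 (fun k j => Cmult c (Cplus (t k j) (Cmult s (Cconj (t j k))))) alpha n = Cmult c (Cplus (off2 t alpha n) (Cmult s (Cconj (off1 t alpha n)))).
Proof.
  unfold off1, off2, bil. rewrite !Cplus_conj, !Cmult_conj, !Cconj_R. split; ring.
Qed.

Section Osq.
Variable XX : (nat -> Prop) -> Prop.
Variable alph : (nat -> Prop) -> R.

Lemma osq_mix c s t : Cmod c <= / 2 -> Cmod s <= 1 -> osq XX alph t ->
  osq XX alph (fun k j => Cmult c (Cplus (t k j) (Cmult s (Cconj (t j k))))).
Proof.
  intros Hc Hs H X HX eps Heps. destruct (H X HX eps Heps) as [N HN]. exists N. intros n Hn HXn.
  destruct (off_mix c s t (alph X) n) as [E1 E2]. rewrite E1, E2.
  destruct (HN n Hn HXn) as [K1 K2].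
  assert (G : forall u v, Cmod u <= eps -> Cmod v <= eps -> Cmod (Cmult c (Cplus u (Cmult s (Cconj v)))) <= eps).
  { intros u v Hu Hv. rewrite Cmod_mult. apply Rle_trans with (/ 2 * (2 * eps)); [|lra].
    apply Rmult_le_compat; try apply Cmod_ge_0; auto.
    eapply Rle_trans. apply Cmod_triangle. rewrite Cmod_mult, Cmod_conj.
    pose proof (Cmod_ge_0 s). pose proof (Cmod_ge_0 v).
    assert (Cmod s * Cmod v <= 1 * eps) by (apply Rmult_le_compat; auto). lra. }
  split; apply G; auto.
Qed.
End Osq.

Definition Idop : op := blkop dlt.

Definition Approx (dl : R) (h : nat -> nat -> C) (BH : R) (L : nat) : op :=
  opadd (opscal (RtoC (- (4 * BH))) Idop)
        (opadd (LS dl (fun n => mu h n + 4 * BH) dlt L) (LS dl (gg h) (Em dl h) L)).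

Lemma Cmod_Rmult_le (r : R) (z : C) (A : R) : 0 <= r -> r <= A -> Cmod z <= 1 -> Cmod (Cmult (RtoC r) z) <= A.
Proof.
  intros H0 H1 H2. rewrite Cmod_mult, Cmod_R, Rabs_pos_eq by auto. pose proof (Cmod_ge_0 z).
  apply Rle_trans with (r * 1). apply Rmult_le_compat_l; auto. lra.
Qed.

Lemma approx_err dl h BH L k j : 0 < dl -> herm h -> mbound h BH -> 10 * BH < INR L * dl ->
  (k / 2 = j / 2)%nat -> Cmod (Cplus (h k j) (Cmult (RtoC (-1)) (ent (Approx dl h BH L) k j))) <= 2 * dl.
Proof.
  intros Hdl Hh HB HL E.
  unfold Approx. rewrite !ent_opadd, ent_opscal, !ent_LS by auto. unfold Idop. rewrite ent_blkop, (proj2 (Nat.eqb_eq _ _) E).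
  set (n := (j / 2)%nat).
  destruct (mu_gg_bound h BH n HB) as [Hmu [Hg0 Hg1]]. apply Rabs_le_between in Hmu.
  pose proof (mbound_nonneg h BH HB) as HB0.
  set (x1 := mu h n + 4 * BH).
  assert (Hx1 : 0 <= x1) by (unfold x1; lra).
  destruct (cnt_props dl Hdl L x1 Hx1) as (_ & _ & A3 & A4 & _).
  assert (Hx1' : x1 < INR (S L) * dl) by (rewrite S_INR; unfold x1; lra).
  specialize (A4 Hx1'). set (c1 := cnt dl L x1) in *.
  destruct (cnt_props dl Hdl L (gg h n) Hg0) as (_ & _ & B3 & B4 & B5).
  assert (Hg' : gg h n < INR (S L) * dl) by (rewrite S_INR; lra).
  specialize (B4 Hg'). set (c2 := cnt dl L (gg h n)) in *.
  pose proof (dlt_mbound k j) as Hd. pose proof (Em_bound dl h Hdl Hh k j) as HE.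
  destruct (Rle_dec dl (gg h n)) as [Hle|Hlt].
  - rewrite (Em_recon dl h k j Hdl Hh E Hle). fold n.
    match goal with |- Cmod ?z <= _ => replace z with
      (Cplus (Cmult (RtoC (x1 - dl * c1)) (dlt k j)) (Cmult (RtoC (gg h n - dl * c2)) (Em dl h k j)))
      by (unfold x1; apply C_ext; simpl; ring) end.
    eapply Rle_trans. apply Cmod_triangle.
    assert (Cmod (Cmult (RtoC (x1 - dl * c1)) (dlt k j)) <= dl) by (apply Cmod_Rmult_le; lra).
    assert (Cmod (Cmult (RtoC (gg h n - dl * c2)) (Em dl h k j)) <= dl) by (apply Cmod_Rmult_le; lra).
    lra.
  - assert (Hc2 : c2 = 0) by (apply B5; lra). rewrite Hc2.
    pose proof (h_minus_mu h k j Hh E) as Hm. fold n in Hm.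
    match goal with |- Cmod ?z <= _ => replace z with
      (Cplus (Cmult (RtoC (x1 - dl * c1)) (dlt k j)) (Cplus (h k j) (Copp (Cmult (RtoC (mu h n)) (dlt k j)))))
      by (unfold x1; apply C_ext; simpl; ring) end.
    eapply Rle_trans. apply Cmod_triangle.
    assert (Cmod (Cmult (RtoC (x1 - dl * c1)) (dlt k j)) <= dl) by (apply Cmod_Rmult_le; lra).
    lra.
Qed.

Section Fin.
Variable XX : (nat -> Prop) -> Prop.
Variable alph : (nat -> Prop) -> R.
Hypothesis Hal : forall X, XX X -> alph X ^ 2 <= 1.

Definition Gp (P : op) : Prop := Mset XX alph P /\ is_projection P.

Lemma G_blk q : mbound q 1 -> herm q -> idem q -> osq XX alph q -> Gp (blkop q).
Proof.
  intros HB Hh Hi Ho. split.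
  - apply Mset_Mchar; auto. apply (pq_Mchar XX alph q 1 HB Ho).
  - apply (blkop_proj q 1 HB Hh Hi).
Qed.

Lemma G_cut a f q : mbound q 1 -> herm q -> idem q -> osq XX alph q -> Gp (blkop (cut a f q)).
Proof.
  intros HB Hh Hi Ho. apply G_blk.
  apply cut_mbound; auto; lra. apply cut_herm; auto. apply cut_idem; auto. apply osq_cut; auto.
Qed.

Variable S : opset.
Hypothesis HS : cstar_subalg S.
Hypothesis HG : forall P, Gp P -> S P.

Definition good (U : op) : Prop := S U /\ Mchar XX alph U.

Lemma good_add U V : good U -> good V -> good (opadd U V).
Proof. intros [H1 H2] [H3 H4]. split. apply (proj1 (proj2 HS)); auto. apply Mchar_add; auto. Qed.
Lemma good_scal c U : good U -> good (opscal c U).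
Proof. intros [H1 H2]. split. apply (proj1 (proj2 (proj2 HS))); auto. apply Mchar_scal; auto. Qed.

Lemma good_G P : Gp P -> good P.
Proof. intros H. split. apply HG; auto. apply Mset_Mchar; auto. apply H. Qed.

Lemma good_Zop : good Zop.
Proof. apply good_G, G_blk. apply zero_mbound. apply zero_herm. apply zero_idem. apply osq_zero. Qed.

Lemma good_Idop : good Idop.
Proof. apply good_G, G_blk. apply dlt_mbound. apply dlt_herm. apply dlt_idem. apply osq_dlt. Qed.

Lemma good_LS dl f q L : mbound q 1 -> herm q -> idem q -> osq XX alph q -> good (LS dl f q L).
Proof.
  intros HB Hh Hi Ho. induction L; simpl.
  - apply good_Zop.
  - apply good_add; auto. apply good_scal. unfold layer. apply good_G, G_cut; auto.
Qed.

Lemma good_Approx dl h BH L : 0 < dl -> herm h -> osq XX alph h -> good (Approx dl h BH L).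
Proof.
  intros Hdl Hh Ho. unfold Approx. apply good_add. apply good_scal, good_Idop.
  apply good_add.
  - apply good_LS. apply dlt_mbound. apply dlt_herm. apply dlt_idem. apply osq_dlt.
  - apply good_LS. apply Em_bound; auto. apply Em_herm; auto. unfold idem. apply Em_idem; auto. apply osq_Em; auto.
Qed.

Lemma forward T : Mchar XX alph T -> S T.
Proof.
  intros [HA Ho]. destruct (A0_mbound T HA) as [B HB]. pose proof (mbound_nonneg _ _ HB) as HB0.
  destruct HS as (_ & _ & _ & _ & _ & Hcl). apply Hcl. apply HA.
  intros eps Heps. set (dl := eps / 8).
  assert (Hdl : 0 < dl) by (unfold dl; lra).
  destruct (nat_large (10 * B / dl)) as [L HL].
  assert (HL' : 10 * B < INR L * dl).
  { apply Rmult_lt_compat_r with (r := dl) in HL; auto. unfold Rdiv in HL. rewrite Rmult_assoc, Rinv_l in HL by lra. lra. }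
  set (t := ent T).
  assert (HoT : osq XX alph t) by exact Ho.
  set (h1 := hH t). set (h2 := hK t).
  assert (Hh1 : herm h1) by apply hH_herm. assert (Hh2 : herm h2) by apply hK_herm.
  assert (Hb1 : mbound h1 B) by (apply hmix_bound; auto; [apply Cmod_half1 | apply Cmod_pm1; auto]).
  assert (Hb2 : mbound h2 B) by (apply hmix_bound; auto; [apply Cmod_half2 | apply Cmod_pm1; auto]).
  assert (Ho1 : osq XX alph h1) by (apply osq_mix; auto; [apply Cmod_half1 | apply Cmod_pm1; auto]).
  assert (Ho2 : osq XX alph h2) by (apply osq_mix; auto; [apply Cmod_half2 | apply Cmod_pm1; auto]).
  set (U := opadd (Approx dl h1 B L) (opscal Ci (Approx dl h2 B L))).
  assert (HU : good U) by (apply good_add; [|apply good_scal]; apply good_Approx; auto).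
  exists U. split. apply HU.
  destruct HU as [_ [HUA _]].
  set (m := fun k j => Cplus (ent T k j) (Cmult (RtoC (-1)) (ent U k j))).
  assert (Hm : forall k j, (k / 2 = j / 2)%nat -> Cmod (m k j) <= 4 * dl).
  { intros k j E. unfold m, U. rewrite ent_opadd, ent_opscal. fold t. rewrite (t_decomp t k j). fold h1 h2.
    assert (Ez : forall a b c d : C, Cplus (Cplus a (Cmult Ci b)) (Cmult (RtoC (-1)) (Cplus c (Cmult Ci d))) =
       Cplus (Cplus a (Cmult (RtoC (-1)) c)) (Cmult Ci (Cplus b (Cmult (RtoC (-1)) d)))) by (intros; ring).
    rewrite Ez.
    eapply Rle_trans. apply Cmod_triangle. rewrite Cmod_mult.
    rewrite Cmod_Ci.
    pose proof (approx_err dl h1 B L k j Hdl Hh1 Hb1 HL' E).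
    pose proof (approx_err dl h2 B L k j Hdl Hh2 Hb2 HL' E). lra. }
  intros x Hx.
  assert (Ev : vadd (T x) (vscal (RtoC (-1)) (U x)) = blockform m x).
  { apply vec_ext; intros j. unfold vadd, vscal. rewrite (block_rep T HA x Hx j), (block_rep U HUA x Hx j).
    unfold blockform, m. ring. }
  rewrite Ev.
  destruct (block_bound x (blockform m x) (2 * (4 * dl) ^ 2) Hx) as [_ Hn].
  - nra.
  - intros j. unfold blockform. apply Cmod_lin2_sq; apply Hm.
    rewrite div_2n; reflexivity. rewrite div_2n1; reflexivity.
  - eapply Rle_trans. apply Hn. right. f_equal.
    replace (2 * (2 * (4 * dl) ^ 2)) with ((8 * dl) ^ 2) by ring. rewrite sqrt_pow2 by lra. unfold dl. field.
Qed.
End Fin.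

Theorem lemma4p18 (XX : (nat -> Prop) -> Prop) (alph : (nat -> Prop) -> R) :
  wide XX -> coherent XX alph -> generated_by_projections (Mset XX alph).
Proof.
  intros _ [Hc _].
  assert (Hal : forall X, XX X -> alph X ^ 2 <= 1).
  { intros X HX. destruct (Hc X HX). nra. }
  assert (Eq : Mset XX alph = Mchar XX alph).
  { apply functional_extensionality; intros T. apply propositional_extensionality. apply Mset_Mchar; auto. }
  intros T. split.
  - intros HT S HS HG. apply (forward XX alph Hal S HS HG). rewrite <- Eq. exact HT.
  - intros HT. apply HT.
    + rewrite Eq. apply Mchar_cstar; auto.
    + intros P [HP _]. exact HP.
Qed.
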